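(* Let $K\ge1$, let $\boldsymbol{\lambda}=(\lambda_1,\dots,\lambda_K)$ with $\lambda_k\ge1$ for all $k$, and let $\beta>0$. For $\boldsymbol{\alpha}=e+\boldsymbol{\lambda}$ with $e\in\mathbb{R}^K_{\ge0}$ (the network output/evidence), put $S=\sum_k\alpha_k$, $\hat p_k=\alpha_k/S$, and for $y$ in the label space $\mathcal{Y}=\{y\in\mathbb{R}^K: y_i\in[0,1],\ \sum_i y_i=1\}$ define $$\mathcal{L}_{VI\text{-}EDL}(\boldsymbol{\alpha},y)=\sum_{k=1}^K(y_k-\hat p_k)^2+\sum_{k=1}^K\frac{\hat p_k(1-\hat p_k)}{S+1}+\beta\Big[\log\Gamma(S)-\sum_{k=1}^K\log\Gamma(\alpha_k)+\sum_{k=1}^K(\alpha_k-\lambda_k)\big(\psi(\alpha_k)-\psi(S)\big)\Big].$$ Then $\mathcal{L}_{VI\text{-}EDL}$ is globally Lipschitz continuous with respect to the network output, with Lipschitz constant $L_h$ (a uniform bound on the absolute values of the partial derivatives $|\partial\mathcal{L}_{VI\text{-}EDL}/\partial\alpha_i|$) satisfying $$L_h\le 2+\frac{1}{(K+1)^2}+\frac{2}{K(K+1)}+\beta\Big(2+\frac{1}{\min_j\lambda_j}+\frac{1}{\|\boldsymbol{\lambda}\|_1}\Big).$$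
   Context: $\Gamma$ is the Gamma function, $\psi$ the digamma function, and $\|\boldsymbol{\lambda}\|_1=\sum_k\lambda_k$. *)

(* Defs.v *)
From Stdlib Require Import Reals Lra.
From Coquelicot Require Import Coquelicot.
Open Scope R_scope.

Fixpoint sumR (K : nat) (f : nat -> R) : R :=
  match K with
  | O => 0
  | S n => sumR n f + f n
  end.

(* Minimum over indices 0..K-1 (K >= 1; value 0 for K = 0, never used). *)
Fixpoint minR (K : nat) (f : nat -> R) : R :=
  match K with
  | O => 0
  | S O => f O
  | S n => Rmin (minR n f) (f n)
  end.

Definition Gamma (x : R) : R :=
  RInt_gen (fun t => Rpower t (x - 1) * exp (- t)) (at_right 0) (Rbar_locally p_infty).

Definition lnGamma (x : R) : R := ln (Gamma x).

Definition digamma (x : R) : R := Derive lnGamma x.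

Definition in_simplex (K : nat) (y : nat -> R) : Prop :=
  (forall i, (i < K)%nat -> 0 <= y i <= 1) /\ sumR K y = 1.

Definition loss_VIEDL (K : nat) (lam : nat -> R) (beta : R)
    (alpha : nat -> R) (y : nat -> R) : R :=
  let S := sumR K alpha in
  let p := fun k => alpha k / S in
  sumR K (fun k => (y k - p k) ^ 2)
  + sumR K (fun k => p k * (1 - p k) / (S + 1))
  + beta * (lnGamma S - sumR K (fun k => lnGamma (alpha k))
            + sumR K (fun k => (alpha k - lam k) * (digamma (alpha k) - digamma S))).

Definition alpha_of (lam e : nat -> R) : nat -> R := fun k => e k + lam k.

(* alpha with coordinate i replaced by t (for partial derivatives). *)
Definition upd (alpha : nat -> R) (i : nat) (t : R) : nat -> R :=
  fun k => if Nat.eqb k i then t else alpha k.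

Definition Lh_bound (K : nat) (lam : nat -> R) (beta : R) : R :=
  2 + 1 / (INR K + 1) ^ 2 + 2 / (INR K * (INR K + 1))
  + beta * (2 + 1 / minR K lam + 1 / sumR K lam).

(* Main.v *)
Require Import Defs.
From Stdlib Require Import Reals Lra Lia FunctionalExtensionality Setoid.
From Coquelicot Require Import Coquelicot.
Open Scope R_scope.


Lemma ballR (x e y : R) : ball x e y <-> Rabs (y - x) < e.
Proof. unfold ball; simpl; unfold AbsRing_ball, abs, minus, plus, opp; simpl. tauto. Qed.

Ltac useH H z := let A := fresh in let B := fresh in let C := fresh in
  destruct (H z) as (A & B & C); [try lra | first [exact A | exact B | exact C | assumption]].

Lemma exRc (f : R -> R) a b : (forall z, Rmin a b <= z <= Rmax a b -> continuous f z) -> ex_RInt f a b.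
Proof. intros H. apply (@ex_RInt_continuous R_CompleteNormedModule). exact H. Qed.

Lemma ChaslesR (f : R -> R) a b c : ex_RInt f a b -> ex_RInt f b c -> RInt f a b + RInt f b c = RInt f a c.
Proof. intros. apply (RInt_Chasles f a b c); auto. Qed.

Lemma RInt_abs_dom (f g : R -> R) (u v : R) :
  (forall z, Rmin u v <= z <= Rmax u v -> continuous f z /\ continuous g z /\ Rabs (f z) <= g z) ->
  Rabs (RInt f u v) <= Rabs (RInt g u v).
Proof.
  intros H.
  assert (key : forall u v, u <= v -> (forall z, u <= z <= v -> continuous f z /\ continuous g z /\ Rabs (f z) <= g z) ->
    Rabs (RInt f u v) <= Rabs (RInt g u v)).
  { clear u v H. intros u v Huv H.
    assert (Ef : ex_RInt f u v).
    { apply exRc. intros z Hz. rewrite Rmin_left in Hz by lra. rewrite Rmax_right in Hz by lra. useH H z. }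
    assert (Eg : ex_RInt g u v).
    { apply exRc. intros z Hz. rewrite Rmin_left in Hz by lra. rewrite Rmax_right in Hz by lra. useH H z. }
    eapply Rle_trans. apply abs_RInt_le; auto.
    assert (Ea : ex_RInt (fun t => Rabs (f t)) u v).
    { apply exRc. intros z Hz. rewrite Rmin_left in Hz by lra. rewrite Rmax_right in Hz by lra.
      apply continuous_comp. useH H z. apply continuous_Rabs. }
    eapply Rle_trans. apply (RInt_le _ g); auto. intros x Hx. useH H x.
    apply Rle_abs. }
  destruct (Rle_dec u v) as [Huv|Huv].
  - apply key; auto. intros z Hz. apply H. rewrite Rmin_left, Rmax_right; lra.
  - assert (Ef : ex_RInt f v u).
    { apply exRc. intros z Hz. apply H. rewrite Rmin_comm, Rmax_comm; auto. }
    assert (Eg : ex_RInt g v u).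
    { apply exRc. intros z Hz. apply H. rewrite Rmin_comm, Rmax_comm; auto. }
    rewrite <- (opp_RInt_swap f) by auto. rewrite <- (opp_RInt_swap g) by auto.
    unfold opp; simpl. rewrite !Rabs_Ropp. apply key. lra.
    intros z Hz. apply H. rewrite Rmin_right, Rmax_left; lra.
Qed.

Definition good (f g : R -> R) (ab : R * R) : Prop :=
  fst ab <= snd ab /\ forall x, fst ab <= x <= snd ab ->
    continuous f x /\ continuous g x /\ Rabs (f x) <= g x.

Lemma good_between (f g : R -> R) a b c d : good f g (a, c) -> good f g (b, c) -> good f g (a, d) ->
  forall z, Rmin a b <= z <= Rmax a b -> continuous f z /\ continuous g z /\ Rabs (f z) <= g z.
Proof.
  unfold good; simpl. intros [H1 H1'] [H2 H2'] [H3 H3'] z Hz.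
  destruct (Rle_dec a b).
  - rewrite Rmin_left, Rmax_right in Hz by lra. apply H1'; lra.
  - rewrite Rmin_right, Rmax_left in Hz by lra. apply H2'; lra.
Qed.

Lemma good_between2 (f g : R -> R) a b c d : good f g (a, c) -> good f g (a, d) -> good f g (b, c) ->
  forall z, Rmin c d <= z <= Rmax c d -> continuous f z /\ continuous g z /\ Rabs (f z) <= g z.
Proof.
  unfold good; simpl. intros [H1 H1'] [H2 H2'] [H3 H3'] z Hz.
  destruct (Rle_dec c d).
  - rewrite Rmin_left, Rmax_right in Hz by lra. apply H2'; lra.
  - rewrite Rmin_right, Rmax_left in Hz by lra. apply H1'; lra.
Qed.

Lemma good_exf f g a b : good f g (a,b) -> ex_RInt f a b.
Proof. intros [H H']. apply exRc. simpl in *. intros z Hz.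
  rewrite Rmin_left, Rmax_right in Hz by lra. useH H' z. Qed.
Lemma good_exg f g a b : good f g (a,b) -> ex_RInt g a b.
Proof. intros [H H']. apply exRc. simpl in *. intros z Hz.
  rewrite Rmin_left, Rmax_right in Hz by lra. useH H' z. Qed.

Lemma dom_ex (Fa Fb : (R -> Prop) -> Prop) {FFa : ProperFilter Fa} {FFb : ProperFilter Fb}
  (f g : R -> R) (lg : R) :
  filter_prod Fa Fb (good f g) ->
  @is_RInt_gen R_NormedModule g Fa Fb lg ->
  @ex_RInt_gen R_NormedModule f Fa Fb.
Proof.
  intros HG Hg.
  set (Fm := filtermap (fun ab : R * R => RInt f (fst ab) (snd ab)) (filter_prod Fa Fb)).
  assert (PF : ProperFilter Fm).
  { apply filtermap_proper_filter. apply filter_prod_proper; auto. }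
  assert (CF : cauchy Fm).
  { intros eps.
    assert (He : 0 < eps / 4) by (destruct eps; simpl; lra).
    assert (Hg' := Hg (ball lg (mkposreal _ He)) (locally_ball _ _)).
    unfold filtermapi in Hg'.
    destruct (filter_and _ _ HG Hg') as [Q R0 HQ HR HQR].
    destruct (filter_ex _ HQ) as [a0 Ha0].
    destruct (filter_ex _ HR) as [b0 Hb0].
    exists (RInt f a0 b0). unfold Fm, filtermap.
    apply Filter_prod with Q R0; auto.
    intros a b Ha Hb. simpl.
    destruct (HQR a b Ha Hb) as [Gab [y1 [Iy1 By1]]].
    destruct (HQR a b0 Ha Hb0) as [Gab0 [y2 [Iy2 By2]]].
    destruct (HQR a0 b Ha0 Hb) as [Ga0b [y3 [Iy3 By3]]].
    destruct (HQR a0 b0 Ha0 Hb0) as [Ga0b0 [y4 [Iy4 By4]]].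
    apply ballR.
    assert (By2' : Rabs (y2 - lg) < eps/4) by (revert By2; unfold ball; simpl; unfold AbsRing_ball, abs, minus, plus, opp; simpl; auto).
    assert (By3' : Rabs (y3 - lg) < eps/4) by (revert By3; unfold ball; simpl; unfold AbsRing_ball, abs, minus, plus, opp; simpl; auto).
    assert (By4' : Rabs (y4 - lg) < eps/4) by (revert By4; unfold ball; simpl; unfold AbsRing_ball, abs, minus, plus, opp; simpl; auto).
    simpl in *.
    assert (B1 := good_between f g a a0 b0 b Gab0 Ga0b0 Gab).
    assert (B2 := good_between2 f g a a0 b0 b Gab0 Gab Ga0b0).
    assert (Ef1 : ex_RInt f a a0) by (apply exRc; intros; apply B1; auto).
    assert (Ef2 : ex_RInt f b0 b) by (apply exRc; intros; apply B2; auto).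
    assert (Eg1 : ex_RInt g a a0) by (apply exRc; intros; apply B1; auto).
    assert (Eg2 : ex_RInt g b0 b) by (apply exRc; intros; apply B2; auto).
    assert (D1 := RInt_abs_dom f g a a0 B1).
    assert (D2 := RInt_abs_dom f g b0 b B2).
    assert (Cf : RInt f a b = RInt f a a0 + RInt f a0 b0 + RInt f b0 b).
    { rewrite <- (ChaslesR f a b0 b). rewrite <- (ChaslesR f a a0 b0). reflexivity.
      auto. eapply good_exf; eauto. eapply good_exf; eauto. auto. }
    assert (Cg1 : RInt g a b0 = RInt g a a0 + RInt g a0 b0).
    { rewrite <- (ChaslesR g a a0 b0); auto. eapply good_exg; eauto. }
    assert (Cg2 : RInt g a0 b = RInt g a0 b0 + RInt g b0 b).
    { rewrite <- (ChaslesR g a0 b0 b); auto. eapply good_exg; eauto. }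
    rewrite (is_RInt_unique _ _ _ _ Iy2) in Cg1.
    rewrite (is_RInt_unique _ _ _ _ Iy3) in Cg2.
    rewrite (is_RInt_unique _ _ _ _ Iy4) in Cg1, Cg2.
    rewrite Cf.
    replace (RInt f a a0 + RInt f a0 b0 + RInt f b0 b - RInt f a0 b0) with (RInt f a a0 + RInt f b0 b) by ring.
    eapply Rle_lt_trans. apply Rabs_triang.
    assert (Rabs (RInt g a a0) < eps/2).
    { replace (RInt g a a0) with ((y2 - lg) - (y4 - lg)) by lra.
      eapply Rle_lt_trans. apply Rabs_triang. rewrite Rabs_Ropp. simpl in *. lra. }
    assert (Rabs (RInt g b0 b) < eps/2).
    { replace (RInt g b0 b) with ((y3 - lg) - (y4 - lg)) by lra.
      eapply Rle_lt_trans. apply Rabs_triang. rewrite Rabs_Ropp. simpl in *. lra. }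
    lra. }
  exists (lim Fm).
  intros P [eps HP].
  unfold filtermapi.
  assert (Hc := complete_cauchy Fm PF CF eps).
  unfold Fm, filtermap in Hc.
  generalize (filter_and _ _ HG Hc). apply filter_imp.
  intros [a b] [Gab Bab]. simpl in *.
  exists (RInt f a b). split.
  - apply (@RInt_correct R_CompleteNormedModule). eapply good_exf; eauto.
  - apply HP. exact Bab.
Qed.

Ltac ballH H := unfold ball in H; simpl in H; unfold AbsRing_ball, abs, minus, plus, opp in H; simpl in H.
Ltac ballG := unfold ball; simpl; unfold AbsRing_ball, abs, minus, plus, opp; simpl.

Lemma cR_der (f : R -> R) x : ex_derive f x -> continuous f x.
Proof. apply (@ex_derive_continuous R_AbsRing R_NormedModule). Qed.
Lemma cR_mult (f g : R -> R) x : continuous f x -> continuous g x -> continuous (fun t => f t * g t) x.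
Proof. apply (@continuous_mult R_UniformSpace R_AbsRing). Qed.
Lemma cR_plus (f g : R -> R) x : continuous f x -> continuous g x -> continuous (fun t => f t + g t) x.
Proof. apply (@continuous_plus R_UniformSpace R_AbsRing R_NormedModule). Qed.
Lemma cR_opp (f : R -> R) x : continuous f x -> continuous (fun t => - f t) x.
Proof. apply (@continuous_opp R_UniformSpace R_AbsRing R_NormedModule). Qed.
Lemma cR_minus (f g : R -> R) x : continuous f x -> continuous g x -> continuous (fun t => f t - g t) x.
Proof. intros. apply cR_plus; auto. apply cR_opp; auto. Qed.
Lemma cR_const (c x : R) : continuous (fun _ : R => c) x.
Proof. apply (@continuous_const R_UniformSpace R_UniformSpace). Qed.
Lemma cR_id (x : R) : continuous (fun t : R => t) x.
Proof. apply (@continuous_id R_UniformSpace). Qed.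
Lemma cR_comp (f g : R -> R) x : continuous f x -> continuous g (f x) -> continuous (fun t => g (f t)) x.
Proof. apply (@continuous_comp R_UniformSpace R_UniformSpace R_UniformSpace). Qed.
Lemma cR_abs (f : R -> R) x : continuous f x -> continuous (fun t => Rabs (f t)) x.
Proof. intros. apply cR_comp; auto. apply continuous_Rabs. Qed.
Lemma cR_pow (f : R -> R) n x : continuous f x -> continuous (fun t => f t ^ n) x.
Proof. intros H. induction n. simpl. apply cR_const. simpl. apply cR_mult; auto. Qed.
Lemma cR_ln x : 0 < x -> continuous ln x.
Proof. intros. apply cR_der. auto_derive. auto. Qed.
Lemma cR_expn x : continuous (fun t => exp (- t)) x.
Proof. apply cR_der. auto_derive. auto. Qed.
Lemma cR_Rpower p x : 0 < x -> continuous (fun t => Rpower t p) x.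
Proof. intros Hx. apply cR_der. eexists. apply is_derive_Reals. apply derivable_pt_lim_power; auto. Qed.
Lemma cR_inv (f : R -> R) x : continuous f x -> f x <> 0 -> continuous (fun t => / f t) x.
Proof. intros. apply cR_comp; auto. apply continuous_Rinv; auto. Qed.


Definition Bnd (n : nat) (s t : R) := Rabs (ln t) ^ n * Rpower t s * exp (- t).

Lemma at_right0_ev (P : R -> Prop) d : 0 < d -> (forall t, 0 < t < d -> P t) -> at_right 0 P.
Proof. intros Hd H. exists (mkposreal d Hd). intros y Hy Hy0. apply H. split; auto.
  ballH Hy. rewrite Ropp_0, Rplus_0_r, Rabs_pos_eq in Hy by lra. simpl in Hy. lra. Qed.

Lemma filterlim_at_point_self (G : R -> R) a : filterlim G (at_point a) (locally (G a)).
Proof. intros P HP. unfold filtermap, at_point. apply locally_singleton. auto. Qed.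

Lemma is_derive_Rpower (p x : R) : 0 < x -> is_derive (fun t => Rpower t p) x (p * Rpower x (p - 1)).
Proof. intros Hx. apply is_derive_Reals. apply derivable_pt_lim_power; auto. Qed.

Lemma continuous_Rpower (p x : R) : 0 < x -> continuous (fun t => Rpower t p) x.
Proof. intros Hx. apply (@ex_derive_continuous R_AbsRing R_NormedModule). eexists. apply is_derive_Rpower; auto. Qed.

Lemma Rpower_pos x p : 0 < Rpower x p.
Proof. unfold Rpower. apply exp_pos. Qed.

Lemma ln_abs_bound (t d : R) : 0 < t <= 1 -> 0 < d -> Rabs (ln t) <= Rpower t (- d) / d.
Proof.
  intros Ht Hd.
  assert (ln t <= 0). { rewrite <- ln_1. destruct (Req_dec t 1). subst; lra. left; apply ln_increasing; lra. }
  rewrite Rabs_left1 by lra.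
  unfold Rpower. assert (E := exp_ineq1_le (- d * ln t)).
  apply (Rmult_le_reg_r d); auto. unfold Rdiv. rewrite Rmult_assoc, Rinv_l by lra. nra.
Qed.

Lemma exp_neg_le1 t : 0 <= t -> exp (- t) <= 1.
Proof. intros. rewrite <- exp_0. destruct (Req_dec t 0). subst. rewrite Ropp_0. lra. left. apply exp_increasing. lra. Qed.

Lemma Rpower_pow_Rpower t d n : 0 < t -> Rpower t d ^ n = Rpower t (d * INR n).
Proof. intros Ht. rewrite <- Rpower_pow by apply Rpower_pos. rewrite Rpower_mult. auto. Qed.

Lemma piece0 n s (f : R -> R) : -1 < s ->
  (forall t, 0 < t -> continuous f t /\ Rabs (f t) <= Bnd n s t) ->
  @ex_RInt_gen R_NormedModule f (at_right 0) (at_point 1).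
Proof.
  intros Hs Hf.
  set (d := (s + 1) / (2 * (INR n + 1))).
  assert (Hn : 0 <= INR n) by apply pos_INR.
  assert (Hd : 0 < d) by (unfold d; apply Rdiv_lt_0_compat; lra).
  assert (Hnd : INR n * d <= (s + 1) / 2).
  { unfold d. unfold Rdiv. rewrite Rinv_mult.
    assert (0 < / (INR n + 1)) by (apply Rinv_0_lt_compat; lra).
    assert (INR n * / (INR n + 1) <= 1).
    { apply (Rmult_le_reg_r (INR n + 1)). lra. rewrite Rmult_assoc, Rinv_l by lra. lra. }
    assert (0 < / 2) by lra. nra. }
  set (r := s - INR n * d).
  assert (Hr : 0 < r + 1) by (unfold r; lra).
  set (C := (/ d) ^ n).
  assert (HC : 0 < C) by (apply pow_lt; apply Rinv_0_lt_compat; auto).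
  set (g := fun t => C * Rpower t r).
  set (G := fun t => C * Rpower t (r + 1) / (r + 1)).
  assert (dG : forall x, 0 < x -> is_derive G x (g x)).
  { intros x Hx. unfold G, g.
    assert (H := is_derive_Rpower (r+1) x Hx).
    replace (r + 1 - 1) with r in H by ring.
    apply is_derive_ext with (fun t => (C / (r+1)) * Rpower t (r + 1)).
    intros t; change (C / (r+1) * Rpower t (r+1) = C * Rpower t (r+1) / (r+1)); field; lra.
    replace (C * Rpower x r) with ((C / (r + 1)) * ((r+1) * Rpower x r)) by (field; lra).
    apply is_derive_scal; auto. }
  apply (@dom_ex (at_right 0) (at_point 1) (at_right_proper_filter 0) (at_point_filter 1) f g (G 1 - 0)).
  - apply Filter_prod with (fun a => 0 < a < 1) (fun b => b = 1).
    + apply at_right0_ev with 1; auto; lra.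
    + unfold at_point; auto.
    + intros a b Ha Hb. subst b. split; simpl. lra.
      intros x Hx. destruct (Hf x) as [H1 H2]. lra.
      split; auto. split.
      * unfold g. apply cR_mult. apply cR_const. apply cR_Rpower; lra.
      * eapply Rle_trans. apply H2. unfold Bnd, g.
        assert (Ex := exp_neg_le1 x). 
        assert (0 <= Rabs (ln x) ^ n) by (apply pow_le; apply Rabs_pos).
        assert (P1 := Rpower_pos x s).
        apply Rle_trans with (Rabs (ln x) ^ n * Rpower x s).
        { assert (0 < exp (-x)) by apply exp_pos.
          rewrite <- (Rmult_1_r (Rabs (ln x) ^ n * Rpower x s)) at 2. apply Rmult_le_compat_l. nra. apply Ex; lra. }
        apply Rle_trans with ((Rpower x (- d) / d) ^ n * Rpower x s).
        { apply Rmult_le_compat_r. lra. apply pow_incr. split. apply Rabs_pos. apply ln_abs_bound; lra. }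
        unfold Rdiv. rewrite Rpow_mult_distr. rewrite Rpower_pow_Rpower by lra.
        unfold C. rewrite (Rmult_comm (Rpower x (- d * INR n))), Rmult_assoc, <- Rpower_plus.
        right. f_equal. f_equal. unfold r. ring.
  - apply is_RInt_gen_ext with (Derive G).
    + apply Filter_prod with (fun a => 0 < a < 1) (fun b => b = 1).
      apply at_right0_ev with 1; auto; lra. unfold at_point; auto.
      intros a b Ha Hb x Hx. simpl in Hx. apply is_derive_unique. apply dG.
      subst b. rewrite Rmin_left in Hx by lra. lra.
    + apply (is_RInt_gen_Derive (Fa := at_right 0) (Fb := at_point 1)).
      * apply Filter_prod with (fun a => 0 < a < 1) (fun b => b = 1).
        apply at_right0_ev with 1; auto; lra. unfold at_point; auto.
        intros a b Ha Hb x Hx. simpl in Hx. subst b. rewrite Rmin_left in Hx by lra.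
        eexists. apply dG. lra.
      * apply Filter_prod with (fun a => 0 < a < 1) (fun b => b = 1).
        apply at_right0_ev with 1; auto; lra. unfold at_point; auto.
        intros a b Ha Hb x Hx. simpl in Hx. subst b. rewrite Rmin_left in Hx by lra.
        apply continuous_ext_loc with g.
        { assert (Hx0 : 0 < x) by lra. exists (mkposreal x Hx0). intros y Hy. ballH Hy.
          apply sym_eq, is_derive_unique, dG. apply Rabs_lt_between in Hy. lra. }
        unfold g. apply cR_mult. apply cR_const. apply cR_Rpower; lra.
      * intros P [eps HP]. unfold filtermap.
        set (dd := Rpower (eps * (r + 1) / C) (/ (r + 1))).
        assert (Hdd : 0 < dd) by apply Rpower_pos.
        apply at_right0_ev with dd; auto. intros t Ht. apply HP. ballG. unfold G.
        rewrite Ropp_0, Rplus_0_r. rewrite Rabs_pos_eq.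
        2: { apply Rmult_le_pos. apply Rmult_le_pos. lra. left; apply Rpower_pos. left; apply Rinv_0_lt_compat; lra. }
        assert (Rpower t (r + 1) < Rpower dd (r + 1)) by (apply Rlt_Rpower_l; lra).
        unfold dd in H. rewrite Rpower_mult, Rinv_l, Rpower_1 in H by (first [lra | apply Rdiv_lt_0_compat; [apply Rmult_lt_0_compat; [apply cond_pos | lra] | lra]]).
        apply (Rmult_lt_reg_r ((r+1) / C)). apply Rdiv_lt_0_compat; lra.
        replace (C * Rpower t (r + 1) / (r + 1) * ((r + 1) / C)) with (Rpower t (r + 1)) by (field; lra).
        replace (eps * ((r + 1) / C)) with (eps * (r + 1) / C) by (field; lra). auto.
      * apply filterlim_at_point_self.
Qed.

Lemma Rpower_exp u q : Rpower (exp u) q = exp (q * u).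
Proof. unfold Rpower. rewrite ln_exp. auto. Qed.

Lemma bnd_inf n s t : 1 <= t ->
  Bnd n s t <= Rpower (INR n + Rabs s + 2) (INR n + Rabs s + 2) * / (t * t).
Proof.
  intros Ht. set (q := INR n + Rabs s + 2).
  assert (Hn : 0 <= INR n) by apply pos_INR.
  assert (Hq : 2 <= q) by (unfold q; assert (0 <= Rabs s) by apply Rabs_pos; lra).
  assert (L0 : 0 <= ln t) by (rewrite <- ln_1; destruct (Req_dec t 1); [subst; lra| left; apply ln_increasing; lra]).
  assert (L1 : ln t <= t) by (assert (E := exp_ineq1_le (ln t)); rewrite exp_ln in E; lra).
  unfold Bnd. rewrite Rabs_pos_eq by lra.
  apply Rle_trans with (Rpower t (q - 2) * exp (- t)).
  { apply Rmult_le_compat_r. left; apply exp_pos.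
    apply Rle_trans with (Rpower t (INR n) * Rpower t s).
    apply Rmult_le_compat_r. left; apply Rpower_pos. rewrite Rpower_pow by lra. apply pow_incr. lra.
    rewrite <- Rpower_plus. apply Rle_Rpower; auto. unfold q. assert (s <= Rabs s) by apply Rle_abs. lra. }
  replace (q - 2) with (q + - INR 2) by (simpl; ring). rewrite Rpower_plus, Rpower_Ropp.
  rewrite Rpower_pow by lra. simpl.
  assert (Hq0 : 0 < q) by lra.
  assert (Rpower t q <= Rpower q q * exp t).
  { replace t with (q * (t / q)) at 1 by (field; lra).
    rewrite <- Rpower_mult_distr by (try apply Rdiv_lt_0_compat; lra).
    apply Rmult_le_compat_l. left; apply Rpower_pos.
    apply Rle_trans with (Rpower (exp (t / q)) q).
    apply Rle_Rpower_l. lra. split. apply Rdiv_lt_0_compat; lra. assert (E := exp_ineq1_le (t / q)). lra.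
    rewrite Rpower_exp. right. f_equal. field. lra. }
  assert (0 < t * (t * 1)) by nra.
  assert (0 < / (t * (t * 1))) by (apply Rinv_0_lt_compat; auto).
  assert (exp t * exp (- t) = 1) by (rewrite <- exp_plus; replace (t + - t) with 0 by ring; apply exp_0).
  assert (0 < exp (- t)) by apply exp_pos.
  replace (t * t) with (t * (t * 1)) by ring.
  assert (A : Rpower t q * exp (- t) <= Rpower q q).
  { apply Rle_trans with (Rpower q q * exp t * exp (- t)). apply Rmult_le_compat_r; lra.
    rewrite Rmult_assoc, H2. lra. }
  replace (Rpower t q * / (t * (t * 1)) * exp (- t)) with ((Rpower t q * exp (- t)) * / (t * (t * 1))) by ring.
  apply Rmult_le_compat_r; lra.
Qed.

Lemma piece1 n s (f : R -> R) :
  (forall t, 0 < t -> continuous f t /\ Rabs (f t) <= Bnd n s t) ->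
  @ex_RInt_gen R_NormedModule f (at_point 1) (Rbar_locally p_infty).
Proof.
  intros Hf.
  set (C := Rpower (INR n + Rabs s + 2) (INR n + Rabs s + 2)).
  assert (HC : 0 < C) by apply Rpower_pos.
  set (g := fun t => C * / (t * t)).
  set (G := fun t => - C * / t).
  assert (dG : forall x, 0 < x -> is_derive G x (g x)).
  { intros x Hx. unfold G, g. auto_derive. lra. field. lra. }
  apply (@dom_ex (at_point 1) (Rbar_locally p_infty) (at_point_filter 1) (Rbar_locally_filter p_infty) f g (0 - G 1)).
  - apply Filter_prod with (fun a => a = 1) (fun b => 1 < b).
    + unfold at_point; auto.
    + exists 1. auto.
    + intros a b Ha Hb. subst a. split; simpl. lra.
      intros x Hx. destruct (Hf x) as [H1 H2]. lra.
      split; auto. split.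
      * unfold g. apply cR_mult. apply cR_const. apply cR_inv. apply cR_mult; apply cR_id. nra.
      * eapply Rle_trans. apply H2. apply bnd_inf. lra.
  - apply is_RInt_gen_ext with (Derive G).
    + apply Filter_prod with (fun a => a = 1) (fun b => 1 < b).
      unfold at_point; auto. exists 1; auto.
      intros a b Ha Hb x Hx. simpl in Hx. apply is_derive_unique. apply dG.
      subst a. rewrite Rmin_left in Hx by lra. lra.
    + apply (is_RInt_gen_Derive (Fa := at_point 1) (Fb := Rbar_locally p_infty)).
      * apply Filter_prod with (fun a => a = 1) (fun b => 1 < b).
        unfold at_point; auto. exists 1; auto.
        intros a b Ha Hb x Hx. simpl in Hx. subst a. rewrite Rmin_left in Hx by lra.
        eexists. apply dG. lra.
      * apply Filter_prod with (fun a => a = 1) (fun b => 1 < b).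
        unfold at_point; auto. exists 1; auto.
        intros a b Ha Hb x Hx. simpl in Hx. subst a. rewrite Rmin_left in Hx by lra.
        apply continuous_ext_loc with g.
        { assert (Hx0 : 0 < x) by lra. exists (mkposreal x Hx0). intros y Hy. ballH Hy.
          apply sym_eq, is_derive_unique, dG. apply Rabs_lt_between in Hy. simpl in Hy. lra. }
        unfold g. apply cR_mult. apply cR_const. apply cR_inv. apply cR_mult; apply cR_id. nra.
      * apply filterlim_at_point_self.
      * intros P [eps HP]. unfold filtermap.
        exists ((C + 1) / eps). intros t Ht. apply HP. ballG. unfold G.
        assert (He := cond_pos eps).
        assert (0 < (C + 1) / eps) by (apply Rdiv_lt_0_compat; lra).
        rewrite Ropp_0, Rplus_0_r.
        assert (0 < / t) by (apply Rinv_0_lt_compat; lra).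
        rewrite Rabs_left by nra.
        assert (t * eps > C + 1).
        { apply (Rmult_lt_reg_r (/ eps)). apply Rinv_0_lt_compat; lra.
          rewrite Rmult_assoc, Rinv_r by lra. unfold Rdiv in Ht. lra. }
        apply (Rmult_lt_reg_r t). lra.
        replace (- (- C * / t) * t) with C by (field; lra). nra.
Qed.

Lemma int_dom n s (f : R -> R) : -1 < s ->
  (forall t, 0 < t -> continuous f t /\ Rabs (f t) <= Bnd n s t) ->
  @ex_RInt_gen R_NormedModule f (at_right 0) (Rbar_locally p_infty).
Proof.
  intros Hs Hf. apply (ex_RInt_gen_Chasles (Fa := at_right 0) (Fc := Rbar_locally p_infty) f 1).
  eapply piece0; eauto. eapply piece1; eauto.
Qed.


Definition phi (j : nat) (s t : R) := ln t ^ j * Rpower t s * exp (- t).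
Definition J (j : nat) (s : R) := RInt_gen (phi j s) (at_right 0) (Rbar_locally p_infty).

Lemma phi_cont j s t : 0 < t -> continuous (phi j s) t.
Proof. intros Ht. unfold phi. apply cR_mult. apply cR_mult. apply cR_pow. apply cR_ln; auto.
  apply cR_Rpower; auto. apply cR_expn. Qed.

Lemma phi_abs j s t : Rabs (phi j s t) = Bnd j s t.
Proof. unfold phi, Bnd. rewrite !Rabs_mult, RPow_abs. rewrite (Rabs_pos_eq (Rpower t s)) by (left; apply Rpower_pos).
  rewrite (Rabs_pos_eq (exp (- t))) by (left; apply exp_pos). auto. Qed.

Lemma phi_int j s : -1 < s -> @is_RInt_gen R_NormedModule (phi j s) (at_right 0) (Rbar_locally p_infty) (J j s).
Proof. intros Hs. apply (RInt_gen_correct (V := R_CompleteNormedModule)).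
  apply (int_dom j s). auto. intros t Ht. split. apply phi_cont; auto. rewrite phi_abs. lra. Qed.

Lemma Bnd_cont n s t : 0 < t -> continuous (Bnd n s) t.
Proof. intros Ht. unfold Bnd. apply cR_mult. apply cR_mult. apply cR_pow. apply cR_abs. apply cR_ln; auto.
  apply cR_Rpower; auto. apply cR_expn. Qed.

Lemma Bnd_int n s : -1 < s -> exists l, @is_RInt_gen R_NormedModule (Bnd n s) (at_right 0) (Rbar_locally p_infty) l.
Proof. intros Hs. exists (RInt_gen (Bnd n s) (at_right 0) (Rbar_locally p_infty)).
  apply (RInt_gen_correct (V := R_CompleteNormedModule)).
  apply (int_dom n s). auto. intros t Ht. split. apply Bnd_cont; auto.
  unfold Bnd. rewrite !Rabs_mult, RPow_abs, Rabs_Rabsolu. rewrite (Rabs_pos_eq (Rpower t s)) by (left; apply Rpower_pos).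
  rewrite (Rabs_pos_eq (exp (- t))) by (left; apply exp_pos). lra. Qed.

Lemma F0inf_ev : filter_prod (at_right 0) (Rbar_locally p_infty) (fun ab => 0 < fst ab < 1 /\ 1 < snd ab).
Proof. apply Filter_prod with (fun a => 0 < a < 1) (fun b => 1 < b).
  apply at_right0_ev with 1; auto; lra. exists 1; auto. intros; simpl; auto. Qed.

Lemma RInt_gen_lower (f : R -> R) l :
  @is_RInt_gen R_NormedModule f (at_right 0) (Rbar_locally p_infty) l ->
  (forall t, 0 < t -> continuous f t /\ 0 <= f t) -> RInt f 1 2 <= l.
Proof.
  intros Hl Hf. destruct (Rle_dec (RInt f 1 2) l) as [|Hn]; auto. exfalso.
  assert (He : 0 < RInt f 1 2 - l) by lra.
  assert (H := Hl (ball l (mkposreal _ He)) (locally_ball _ _)). unfold filtermapi in H.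
  destruct H as [Q Rr [d Hd] [M HM] HQR].
  set (a := Rmin (d / 2) (1/2)).
  assert (Ha : 0 < a < 1).
  { unfold a. assert (Hd0 := cond_pos d). unfold Rmin; destruct Rle_dec; lra. }
  assert (HaQ : Q a).
  { apply Hd. ballG. rewrite Ropp_0, Rplus_0_r, Rabs_pos_eq by lra. unfold a. assert (Hd0 := cond_pos d).
    unfold Rmin; destruct Rle_dec; lra. lra. }
  set (b := Rmax (M + 1) 2).
  assert (Hb : 2 <= b /\ M < b) by (unfold b, Rmax; destruct Rle_dec; lra).
  destruct (HQR a b HaQ (HM b ltac:(lra))) as [y [Hy By]].
  ballH By.
  assert (Ex : forall u v, 0 < u -> u <= v -> ex_RInt f u v).
  { intros u v Hu Huv. apply exRc. intros z Hz. rewrite Rmin_left, Rmax_right in Hz by lra. apply Hf. lra. }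
  assert (Ge : forall u v, 0 < u -> u <= v -> 0 <= RInt f u v).
  { intros u v Hu Huv. apply RInt_ge_0; auto. intros x Hx. apply Hf. lra. }
  rewrite <- (is_RInt_unique _ _ _ _ Hy) in By. simpl in By.
  rewrite <- (ChaslesR f a 2 b) in By by (apply Ex; lra).
  rewrite <- (ChaslesR f a 1 2) in By by (apply Ex; lra).
  assert (0 <= RInt f a 1) by (apply Ge; lra).
  assert (0 <= RInt f 2 b) by (apply Ge; lra).
  apply Rabs_lt_between in By. simpl in By. lra.
Qed.

Lemma phi0_pos s : -1 < s -> 0 < J 0 s.
Proof.
  intros Hs. apply Rlt_le_trans with (RInt (phi 0 s) 1 2).
  - apply RInt_gt_0. lra. intros x Hx. unfold phi. simpl. rewrite Rmult_1_l.
    apply Rmult_lt_0_compat. apply Rpower_pos. apply exp_pos.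
    intros x Hx. apply phi_cont. lra.
  - apply RInt_gen_lower. apply phi_int; auto. intros t Ht. split. apply phi_cont; auto.
    unfold phi; simpl. rewrite Rmult_1_l. left. apply Rmult_lt_0_compat. apply Rpower_pos. apply exp_pos.
Qed.

Lemma RInt_gen_nonneg (f : R -> R) l :
  @is_RInt_gen R_NormedModule f (at_right 0) (Rbar_locally p_infty) l ->
  (forall t, 0 < t -> continuous f t /\ 0 <= f t) -> 0 <= l.
Proof.
  intros Hl Hf. eapply Rle_trans. 2: eapply RInt_gen_lower; eauto.
  apply RInt_ge_0. lra. apply exRc. intros z Hz. rewrite Rmin_left, Rmax_right in Hz by lra. apply Hf; lra.
  intros x Hx. apply Hf. lra.
Qed.

Lemma RInt_gen_le_abs (f g : R -> R) lf lg :
  @is_RInt_gen R_NormedModule f (at_right 0) (Rbar_locally p_infty) lf ->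
  @is_RInt_gen R_NormedModule g (at_right 0) (Rbar_locally p_infty) lg ->
  (forall t, 0 < t -> Rabs (f t) <= g t) -> Rabs lf <= lg.
Proof.
  intros Hf Hg H.
  apply (RInt_gen_norm (V := R_CompleteNormedModule) (Fa := at_right 0) (Fb := Rbar_locally p_infty) f g lf lg); auto.
  - generalize F0inf_ev. apply filter_imp. intros [a b]; simpl; lra.
  - generalize F0inf_ev. apply filter_imp. intros [a b]; simpl. intros Hab x Hx. apply H. lra.
Qed.


Lemma between_abs c u : Rmin 0 u <= c <= Rmax 0 u -> Rabs c <= Rabs u.
Proof. intros H. unfold Rmin, Rmax in H. destruct Rle_dec.
  rewrite !Rabs_pos_eq; lra. rewrite !Rabs_left1; lra. Qed.

Lemma exp_m1 c : Rabs (exp c - 1) <= Rabs c * exp (Rabs c).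
Proof.
  destruct (MVT_gen exp 0 c exp) as [x [Hx E]].
  - intros x _. apply is_derive_Reals. apply derivable_pt_lim_exp.
  - intros x _. apply derivable_continuous_pt. apply derivable_pt_exp.
  - rewrite exp_0 in E. rewrite E, Rminus_0_r, Rabs_mult, Rabs_pos_eq by (left; apply exp_pos).
    rewrite Rmult_comm. apply Rmult_le_compat_l. apply Rabs_pos.
    assert (Hxc := between_abs x c Hx).
    destruct (Req_dec x (Rabs c)). subst; lra. left. apply exp_increasing.
    assert (x <= Rabs x) by apply Rle_abs. lra.
Qed.

Lemma E1 u : Rabs (exp u - 1 - u) <= u ^ 2 * exp (Rabs u).
Proof.
  destruct (MVT_gen (fun v => exp v - 1 - v) 0 u (fun v => exp v - 1)) as [c [Hc E]].
  - intros x _. apply is_derive_Reals. auto_derive. auto. ring.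
  - intros x _. apply continuity_pt_minus. apply continuity_pt_minus.
    apply derivable_continuous_pt. apply derivable_pt_exp. apply continuity_pt_const. intros a b; auto.
    apply derivable_continuous_pt. apply derivable_pt_id.
  - rewrite exp_0 in E. replace (exp u - 1 - u) with (exp u - 1 - u - (1 - 1 - 0)) by ring.
    rewrite E, Rminus_0_r, Rabs_mult.
    assert (Hcu := between_abs c u Hc).
    assert (H1 := exp_m1 c).
    assert (exp (Rabs c) <= exp (Rabs u)).
    { destruct (Req_dec (Rabs c) (Rabs u)) as [e|]. rewrite e; lra. left; apply exp_increasing; lra. }
    assert (0 <= Rabs c) by apply Rabs_pos.
    assert (0 <= Rabs u) by apply Rabs_pos.
    assert (0 < exp (Rabs c)) by apply exp_pos.
    replace (u ^ 2) with (Rabs u * Rabs u) by (rewrite <- Rabs_mult; simpl; rewrite Rmult_1_r; apply Rabs_pos_eq; nra).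
    apply Rle_trans with (Rabs c * exp (Rabs c) * Rabs u). apply Rmult_le_compat_r; auto.
    apply Rle_trans with (Rabs u * exp (Rabs u) * Rabs u).
    apply Rmult_le_compat_r; auto. apply Rmult_le_compat; lra. right; ring.
Qed.

Lemma exp_abs_le (d h L : R) : Rabs h <= d -> exp (Rabs (h * L)) <= exp (d * L) + exp (- d * L).
Proof.
  intros Hh. assert (0 < exp (d * L)) by apply exp_pos. assert (0 < exp (- d * L)) by apply exp_pos.
  assert (Rabs (h * L) <= Rabs (d * L)).
  { rewrite !Rabs_mult. apply Rmult_le_compat_r. apply Rabs_pos. assert (Rabs h <= Rabs d). 
    rewrite (Rabs_pos_eq d). lra. assert (0 <= Rabs h) by apply Rabs_pos. lra. auto. }
  assert (exp (Rabs (h * L)) <= exp (Rabs (d * L))).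
  { destruct (Req_dec (Rabs (h*L)) (Rabs (d*L))) as [e|]. rewrite e; lra. left; apply exp_increasing; lra. }
  unfold Rabs at 2 in H2. destruct Rcase_abs.
  replace (- (d * L)) with (- d * L) in H2 by ring. lra. lra.
Qed.

Lemma phi_taylor j s h d t : 0 < t -> Rabs h <= d ->
  Rabs (phi j (s + h) t - phi j s t - h * phi (S j) s t)
  <= h ^ 2 * (Bnd (j + 2) (s + d) t + Bnd (j + 2) (s - d) t).
Proof.
  intros Ht Hh.
  assert (E : phi j (s + h) t - phi j s t - h * phi (S j) s t
            = phi j s t * (exp (h * ln t) - 1 - h * ln t)).
  { unfold phi. rewrite Rpower_plus. unfold Rpower at 2. simpl. ring. }
  rewrite E, Rabs_mult, phi_abs.
  assert (T := E1 (h * ln t)).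
  assert (X := exp_abs_le d h (ln t) Hh).
  assert (0 <= Bnd j s t) by (rewrite <- phi_abs; apply Rabs_pos).
  apply Rle_trans with (Bnd j s t * ((h * ln t) ^ 2 * exp (Rabs (h * ln t)))).
  apply Rmult_le_compat_l; auto.
  apply Rle_trans with (Bnd j s t * ((h * ln t) ^ 2 * (exp (d * ln t) + exp (- d * ln t)))).
  apply Rmult_le_compat_l; auto. apply Rmult_le_compat_l; auto. apply pow2_ge_0.
  right. unfold Bnd. unfold Rminus. rewrite !Rpower_plus. 
  rewrite pow_add. replace (Rabs (ln t) ^ 2) with (ln t ^ 2).
  unfold Rpower at 3 5. ring.
  simpl. rewrite !Rmult_1_r. rewrite <- Rabs_mult. rewrite Rabs_pos_eq. auto. nra.
Qed.

Lemma J_deriv j s : -1 < s -> is_derive (J j) s (J (S j) s).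
Proof.
  intros Hs. set (d := (s + 1) / 2).
  assert (Hd : 0 < d) by (unfold d; lra).
  destruct (Bnd_int (j + 2) (s + d)) as [l1 H1]. unfold d; lra.
  destruct (Bnd_int (j + 2) (s - d)) as [l2 H2]. unfold d; lra.
  assert (Hl : 0 <= l1 + l2).
  { apply RInt_gen_nonneg with (fun t => Bnd (j+2) (s+d) t + Bnd (j+2) (s-d) t).
    apply (is_RInt_gen_plus (Fa := at_right 0) (Fb := Rbar_locally p_infty) _ _ _ _ H1 H2).
    intros t Ht. split. apply cR_plus; apply Bnd_cont; auto.
    assert (0 <= Bnd (j+2) (s+d) t) by (rewrite <- phi_abs; apply Rabs_pos).
    assert (0 <= Bnd (j+2) (s-d) t) by (rewrite <- phi_abs; apply Rabs_pos). lra. }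
  assert (key : forall h, Rabs h <= d -> Rabs (J j (s + h) - J j s - h * J (S j) s) <= h ^ 2 * (l1 + l2)).
  { intros h Hh.
    assert (Hsh : -1 < s + h) by (apply Rabs_le_between in Hh; unfold d in *; lra).
    assert (I1 := phi_int j (s + h) Hsh).
    assert (I2 := phi_int j s Hs).
    assert (I3 := phi_int (S j) s Hs).
    assert (I := is_RInt_gen_minus (Fa := at_right 0) (Fb := Rbar_locally p_infty) _ _ _ _
                  (is_RInt_gen_minus (Fa := at_right 0) (Fb := Rbar_locally p_infty) _ _ _ _ I1 I2)
                  (is_RInt_gen_scal (Fa := at_right 0) (Fb := Rbar_locally p_infty) _ h _ I3)).
    assert (G := is_RInt_gen_scal (Fa := at_right 0) (Fb := Rbar_locally p_infty) _ (h ^ 2) _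
                  (is_RInt_gen_plus (Fa := at_right 0) (Fb := Rbar_locally p_infty) _ _ _ _ H1 H2)).
    assert (X := RInt_gen_le_abs _ _ _ _ I G).
    unfold minus, plus, opp, scal in X; simpl in X. unfold mult in X; simpl in X.
    replace (J j (s + h) - J j s - h * J (S j) s) with (J j (s + h) + - J j s + - (h * J (S j) s)) by ring.
    apply X. intros t Ht. unfold minus, plus, opp, scal, mult; simpl.
    replace (phi j (s + h) t + - phi j s t + - (h * phi (S j) s t)) with (phi j (s + h) t - phi j s t - h * phi (S j) s t) by ring.
    apply phi_taylor; auto. }
  apply is_derive_Reals. intros eps Heps.
  assert (Hm : 0 < eps / (l1 + l2 + 1)) by (apply Rdiv_lt_0_compat; lra).
  exists (mkposreal _ (Rmin_pos _ _ Hd Hm)). intros h Hh0 Hh. simpl in Hh.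
  assert (Hh1 : Rabs h <= d) by (assert (Rmin d (eps / (l1 + l2 + 1)) <= d) by apply Rmin_l; lra).
  assert (Hh2 : Rabs h < eps / (l1 + l2 + 1)) by (assert (Rmin d (eps / (l1 + l2 + 1)) <= eps / (l1 + l2 + 1)) by apply Rmin_r; lra).
  assert (K := key h Hh1).
  replace ((J j (s + h) - J j s) / h - J (S j) s) with ((J j (s + h) - J j s - h * J (S j) s) / h) by (field; auto).
  unfold Rdiv. rewrite Rabs_mult, Rabs_inv.
  assert (Ha : 0 < Rabs h) by (apply Rabs_pos_lt; auto).
  apply (Rmult_lt_reg_r (Rabs h)); auto. rewrite Rmult_assoc, Rinv_l by lra. rewrite Rmult_1_r.
  eapply Rle_lt_trans. apply K.
  replace (h ^ 2) with (Rabs h * Rabs h) by (rewrite <- Rabs_mult; simpl; rewrite Rmult_1_r; apply Rabs_pos_eq; nra).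
  assert (Rabs h * (l1 + l2 + 1) < eps).
  { apply (Rmult_lt_reg_r (/ (l1 + l2 + 1))). apply Rinv_0_lt_compat; lra.
    rewrite Rmult_assoc, Rinv_r by lra. lra. }
  nra.
Qed.


Lemma ext_pos (f g : R -> R) l :
  (forall t, 0 < t -> f t = g t) ->
  @is_RInt_gen R_NormedModule f (at_right 0) (Rbar_locally p_infty) l ->
  @is_RInt_gen R_NormedModule g (at_right 0) (Rbar_locally p_infty) l.
Proof.
  intros H. apply (is_RInt_gen_ext (Fa := at_right 0) (Fb := Rbar_locally p_infty)).
  generalize F0inf_ev. apply filter_imp. intros [a b]; simpl. intros Hab x Hx.
  rewrite Rmin_left in Hx by lra. apply H; lra.
Qed.

Lemma uniq_gen (f : R -> R) l1 l2 :
  @is_RInt_gen R_NormedModule f (at_right 0) (Rbar_locally p_infty) l1 ->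
  @is_RInt_gen R_NormedModule f (at_right 0) (Rbar_locally p_infty) l2 -> l1 = l2.
Proof.
  intros H1 H2.
  rewrite <- (is_RInt_gen_unique (V := R_CompleteNormedModule) (Fa := at_right 0) (Fb := Rbar_locally p_infty) f l1 H1).
  rewrite <- (is_RInt_gen_unique (V := R_CompleteNormedModule) (Fa := at_right 0) (Fb := Rbar_locally p_infty) f l2 H2).
  auto.
Qed.

Lemma J_rec s : -1 < s -> J 0 (s + 1) = (s + 1) * J 0 s.
Proof.
  intros Hs.
  set (G := fun t => - Rpower t (s + 1) * exp (- t)).
  set (g := fun t => phi 0 (s + 1) t - (s + 1) * phi 0 s t).
  assert (dG : forall t, 0 < t -> is_derive G t (g t)).
  { intros t Ht. unfold G, g, phi. simpl.
    assert (H := is_derive_Rpower (s + 1) t Ht). replace (s + 1 - 1) with s in H by ring.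
    apply (is_derive_ext (fun t => (-1) * (Rpower t (s + 1) * exp (- t)))). intros u. simpl. ring.
    replace (1 * Rpower t (s + 1) * exp (- t) - (s + 1) * (1 * Rpower t s * exp (- t)))
      with ((-1) * (((s + 1) * Rpower t s) * exp (- t) + Rpower t (s + 1) * (- exp (- t)))) by ring.
    apply (is_derive_scal (fun t => Rpower t (s + 1) * exp (- t))).
    apply (is_derive_mult (fun t => Rpower t (s + 1)) (fun t => exp (- t))). auto.
    auto_derive. auto. ring. intros; apply Rmult_comm. }
  assert (A1 : @is_RInt_gen R_NormedModule g (at_right 0) (Rbar_locally p_infty) (0 - 0)).
  { apply ext_pos with (Derive G). intros t Ht. apply is_derive_unique. auto.
    apply (is_RInt_gen_Derive (Fa := at_right 0) (Fb := Rbar_locally p_infty)).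
    - generalize F0inf_ev. apply filter_imp. intros [a b]; simpl. intros Hab x Hx.
      rewrite Rmin_left in Hx by lra. eexists. apply dG. lra.
    - generalize F0inf_ev. apply filter_imp. intros [a b]; simpl. intros Hab x Hx.
      rewrite Rmin_left in Hx by lra.
      apply continuous_ext_loc with g.
      { assert (Hx0 : 0 < x) by lra. exists (mkposreal x Hx0). intros y Hy. ballH Hy.
        apply sym_eq, is_derive_unique, dG. apply Rabs_lt_between in Hy. simpl in Hy. lra. }
      unfold g. apply cR_minus. apply phi_cont; lra. apply cR_mult. apply cR_const. apply phi_cont; lra.
    - intros P [eps HP]. unfold filtermap.
      assert (He := cond_pos eps).
      set (dd := Rmin 1 (Rpower eps (/ (s + 1)))).
      assert (Hdd : 0 < dd) by (unfold dd; apply Rmin_pos; [lra | apply Rpower_pos]).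
      apply at_right0_ev with dd; auto. intros t Ht. apply HP. ballG. unfold G.
      rewrite Ropp_0, Rplus_0_r.
      assert (0 < Rpower t (s+1)) by apply Rpower_pos. assert (0 < exp (- t)) by apply exp_pos.
      assert (exp (- t) <= 1) by (apply exp_neg_le1; lra).
      rewrite Rabs_left by nra.
      assert (Rpower t (s + 1) < Rpower (Rpower eps (/ (s + 1))) (s + 1)).
      { apply Rlt_Rpower_l. lra. split. lra. assert (dd <= Rpower eps (/ (s + 1))) by apply Rmin_r. lra. }
      rewrite Rpower_mult, Rinv_l, Rpower_1 in H2 by lra. nra.
    - intros P [eps HP]. unfold filtermap.
      assert (He := cond_pos eps).
      set (C := Rpower (INR 0 + Rabs (s + 1) + 2) (INR 0 + Rabs (s + 1) + 2)).
      assert (HC : 0 < C) by apply Rpower_pos.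
      exists (Rmax 1 ((C + 1) / eps)). intros t Ht. apply HP. ballG. unfold G.
      rewrite Ropp_0, Rplus_0_r.
      assert (Ht1 : 1 < t) by (assert (1 <= Rmax 1 ((C + 1) / eps)) by apply Rmax_l; lra).
      assert (Ht2 : (C + 1) / eps < t) by (assert ((C + 1) / eps <= Rmax 1 ((C + 1) / eps)) by apply Rmax_r; lra).
      assert (Bd := bnd_inf 0 (s + 1) t ltac:(lra)). fold C in Bd. unfold Bnd in Bd. simpl in Bd.
      assert (0 < Rpower t (s+1)) by apply Rpower_pos. assert (0 < exp (- t)) by apply exp_pos.
      rewrite Rabs_left by nra.
      assert (C * / (t * t) <= C / t).
      { unfold Rdiv. apply Rmult_le_compat_l. lra. apply Rinv_le_contravar; nra. }
      assert (C / t < eps).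
      { assert (C + 1 < t * eps).
        { replace (C + 1) with ((C + 1) / eps * eps) by (field; lra). apply Rmult_lt_compat_r; lra. }
        apply (Rmult_lt_reg_r t). lra. unfold Rdiv. rewrite Rmult_assoc, Rinv_l by lra. lra. }
      lra. }
  assert (A2 : @is_RInt_gen R_NormedModule g (at_right 0) (Rbar_locally p_infty) (J 0 (s + 1) - (s + 1) * J 0 s)).
  { assert (I := is_RInt_gen_minus (Fa := at_right 0) (Fb := Rbar_locally p_infty) _ _ _ _
           (phi_int 0 (s + 1) ltac:(lra))
           (is_RInt_gen_scal (Fa := at_right 0) (Fb := Rbar_locally p_infty) _ (s + 1) _ (phi_int 0 s Hs))).
    exact I. }
  assert (E := uniq_gen _ _ _ A1 A2). lra.
Qed.

Lemma sinh_ge y : 0 <= y -> 2 * y <= exp y - exp (- y).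
Proof.
  intros Hy. destruct (Req_dec y 0). subst. rewrite Ropp_0, exp_0. lra.
  destruct (MVT_gen (fun v => exp v - exp (- v) - 2 * v) 0 y (fun v => exp v + exp (- v) - 2)) as [c [Hc E]].
  - intros x _. apply is_derive_Reals. auto_derive. auto. ring.
  - intros x _. apply derivable_continuous_pt.
    apply derivable_pt_minus. apply derivable_pt_minus. apply derivable_pt_exp.
    apply derivable_pt_comp. apply derivable_pt_opp. apply derivable_pt_id. apply derivable_pt_exp.
    apply derivable_pt_mult. apply derivable_pt_const. apply derivable_pt_id.
  - rewrite Ropp_0, exp_0 in E.
    assert (exp c + exp (- c) - 2 = (exp (c/2) - exp (- (c/2))) ^ 2).
    { assert (Haa : exp (c/2) * exp (c/2) = exp c) by (rewrite <- exp_plus; f_equal; field).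
      assert (Hbb : exp (- (c/2)) * exp (- (c/2)) = exp (- c)) by (rewrite <- exp_plus; f_equal; field).
      assert (Hab : exp (c/2) * exp (- (c/2)) = 1) by (rewrite <- exp_plus; replace (c / 2 + - (c / 2)) with 0 by ring; apply exp_0).
      replace ((exp (c/2) - exp (-(c/2)))^2) with (exp (c/2) * exp (c/2) + exp (-(c/2)) * exp (-(c/2)) - 2 * (exp (c/2) * exp (-(c/2)))) by ring.
      rewrite Haa, Hbb, Hab. ring. }
    assert (0 <= (exp c + exp (- c) - 2) * (y - 0)). { rewrite H0. apply Rmult_le_pos. apply pow2_ge_0. lra. }
    lra.
Qed.

Lemma ln_sq_le u : 0 < u -> ln u ^ 2 <= (u - 1) ^ 2 / u.
Proof.
  intros Hu. set (y := ln u / 2).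
  assert (Eu : u = exp y * exp y) by (rewrite <- exp_plus; unfold y; replace (ln u / 2 + ln u / 2) with (ln u) by field; rewrite exp_ln; auto).
  assert (Ei : exp y * exp (- y) = 1) by (rewrite <- exp_plus; replace (y + - y) with 0 by ring; apply exp_0).
  assert (Hl : ln u = 2 * y) by (unfold y; field).
  assert (Hs : Rabs (2 * y) <= Rabs (exp y - exp (- y))).
  { destruct (Rle_dec 0 y).
    - assert (S := sinh_ge y r). rewrite !Rabs_pos_eq; lra.
    - assert (S := sinh_ge (- y) ltac:(lra)). rewrite Ropp_involutive in S.
      rewrite Rabs_left by lra. rewrite Rabs_left1 by lra. lra. }
  assert (ln u ^ 2 <= (exp y - exp (- y)) ^ 2).
  { rewrite Hl. rewrite <- (pow2_abs (2 * y)), <- (pow2_abs (exp y - exp (- y))).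
    apply pow_incr. split; auto. apply Rabs_pos. }
  assert ((exp y - exp (- y)) ^ 2 = (u - 1) ^ 2 / u).
  { rewrite Eu. field_simplify. 2: { assert (0 < exp y) by apply exp_pos. nra. }
    assert (exp (- y) = / exp y) by (rewrite exp_Ropp; auto). rewrite H0. field.
    assert (0 < exp y) by apply exp_pos. lra. }
  lra.
Qed.

Lemma Gamma_J x : Gamma x = J 0 (x - 1).
Proof. unfold Gamma, J. f_equal. apply functional_extensionality. intros t. unfold phi. simpl. ring. Qed.

Definition DG (x : R) := J 1 (x - 1) / J 0 (x - 1).
Definition TG (x : R) := (J 2 (x - 1) * J 0 (x - 1) - J 1 (x - 1) ^ 2) / J 0 (x - 1) ^ 2.

Lemma J_deriv_shift j x : 0 < x -> is_derive (fun y => J j (y - 1)) x (J (S j) (x - 1)).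
Proof.
  intros Hx. replace (J (S j) (x - 1)) with (1 * J (S j) (x - 1)) by ring.
  apply (is_derive_comp (J j) (fun y => y - 1)). apply J_deriv. lra.
  apply is_derive_Reals. auto_derive. auto. ring.
Qed.

Lemma lnGamma_deriv x : 0 < x -> is_derive lnGamma x (DG x).
Proof.
  intros Hx. unfold lnGamma, DG.
  apply (is_derive_ext (fun y => ln (J 0 (y - 1)))). intros; rewrite Gamma_J; auto.
  assert (P := phi0_pos (x - 1) ltac:(lra)).
  replace (J 1 (x - 1) / J 0 (x - 1)) with (J 1 (x - 1) * / J 0 (x - 1)) by auto.
  apply (is_derive_comp ln (fun y => J 0 (y - 1))).
  apply is_derive_Reals. apply derivable_pt_lim_ln. auto.
  apply J_deriv_shift. auto.
Qed.

Lemma digamma_eq x : 0 < x -> digamma x = DG x.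
Proof. intros Hx. unfold digamma. apply is_derive_unique. apply lnGamma_deriv. auto. Qed.

Lemma digamma_deriv x : 0 < x -> is_derive digamma x (TG x).
Proof.
  intros Hx. apply is_derive_ext_loc with DG.
  { exists (mkposreal x Hx). intros y Hy. ballH Hy. apply sym_eq, digamma_eq. apply Rabs_lt_between in Hy. simpl in Hy. lra. }
  unfold DG, TG.
  assert (P := phi0_pos (x - 1) ltac:(lra)).
  apply (is_derive_ext (fun y => J 1 (y - 1) * / J 0 (y - 1))). intros; auto.
  replace ((J 2 (x - 1) * J 0 (x - 1) - J 1 (x - 1) ^ 2) / J 0 (x - 1) ^ 2)
    with (J 2 (x - 1) * / J 0 (x - 1) + J 1 (x - 1) * (- J 1 (x - 1) / (J 0 (x - 1)) ^ 2)) by (field; lra).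
  apply (is_derive_mult (fun y => J 1 (y - 1)) (fun y => / J 0 (y - 1))).
  apply J_deriv_shift; auto.
  apply (is_derive_inv (fun y => J 0 (y - 1))). apply J_deriv_shift; auto. lra.
  intros; apply Rmult_comm.
Qed.

Lemma quad_int s c : -1 < s ->
  @is_RInt_gen R_NormedModule (fun t => (ln t - c) ^ 2 * Rpower t s * exp (- t)) (at_right 0) (Rbar_locally p_infty)
    (J 2 s - 2 * c * J 1 s + c ^ 2 * J 0 s).
Proof.
  intros Hs.
  assert (I := is_RInt_gen_plus (Fa := at_right 0) (Fb := Rbar_locally p_infty) _ _ _ _
     (is_RInt_gen_minus (Fa := at_right 0) (Fb := Rbar_locally p_infty) _ _ _ _ (phi_int 2 s Hs)
        (is_RInt_gen_scal (Fa := at_right 0) (Fb := Rbar_locally p_infty) _ (2 * c) _ (phi_int 1 s Hs)))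
     (is_RInt_gen_scal (Fa := at_right 0) (Fb := Rbar_locally p_infty) _ (c ^ 2) _ (phi_int 0 s Hs))).
  unfold plus, minus, opp, scal, mult in I; simpl in I.
  replace (J 2 s - 2 * c * J 1 s + c ^ 2 * J 0 s) with (J 2 s + - (2 * c * J 1 s) + c * (c * 1) * J 0 s) by ring.
  eapply ext_pos. 2: exact I. intros t Ht. simpl. unfold phi. unfold plus, mult, opp; simpl. ring.
Qed.

Lemma TG_nonneg x : 0 < x -> 0 <= TG x.
Proof.
  intros Hx. set (s := x - 1). assert (Hs : -1 < s) by (unfold s; lra).
  assert (P := phi0_pos s Hs).
  set (m := J 1 s / J 0 s).
  assert (Q := RInt_gen_nonneg _ _ (quad_int s m Hs)).
  assert (Q' : 0 <= J 2 s - 2 * m * J 1 s + m ^ 2 * J 0 s).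
  { apply Q. intros t Ht. split.
    apply cR_mult. apply cR_mult. apply cR_pow. apply cR_minus. apply cR_ln; auto. apply cR_const.
    apply cR_Rpower; auto. apply cR_expn.
    apply Rmult_le_pos. apply Rmult_le_pos. apply pow2_ge_0. left; apply Rpower_pos. left; apply exp_pos. }
  unfold TG. fold s.
  replace ((J 2 s * J 0 s - J 1 s ^ 2) / J 0 s ^ 2) with ((J 2 s - 2 * m * J 1 s + m ^ 2 * J 0 s) / J 0 s)
    by (unfold m; field; lra).
  apply Rmult_le_pos; auto. left; apply Rinv_0_lt_compat; auto.
Qed.

Lemma TG_le x : 1 < x -> TG x <= / (x - 1).
Proof.
  intros Hx. set (s := x - 1). assert (Hs : 0 < s) by (unfold s; lra).
  assert (P := phi0_pos s ltac:(lra)).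
  set (m := J 1 s / J 0 s). set (c := ln x).
  assert (Qc := quad_int s c ltac:(lra)).
  set (g := fun t => / x * (phi 0 (s + 1) t - 2 * x * phi 0 s t + x ^ 2 * phi 0 (s - 1) t)).
  assert (Ig : @is_RInt_gen R_NormedModule g (at_right 0) (Rbar_locally p_infty)
                 (/ x * (J 0 (s + 1) - 2 * x * J 0 s + x ^ 2 * J 0 (s - 1)))).
  { assert (I := is_RInt_gen_scal (Fa := at_right 0) (Fb := Rbar_locally p_infty) _ (/ x) _
     (is_RInt_gen_plus (Fa := at_right 0) (Fb := Rbar_locally p_infty) _ _ _ _
     (is_RInt_gen_minus (Fa := at_right 0) (Fb := Rbar_locally p_infty) _ _ _ _ (phi_int 0 (s + 1) ltac:(lra))
        (is_RInt_gen_scal (Fa := at_right 0) (Fb := Rbar_locally p_infty) _ (2 * x) _ (phi_int 0 s ltac:(lra))))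
     (is_RInt_gen_scal (Fa := at_right 0) (Fb := Rbar_locally p_infty) _ (x ^ 2) _ (phi_int 0 (s - 1) ltac:(lra))))).
    unfold plus, minus, opp, scal, mult in I; simpl in I.
    replace (/ x * (J 0 (s + 1) - 2 * x * J 0 s + x ^ 2 * J 0 (s - 1)))
      with (/ x * (J 0 (s + 1) + - (2 * x * J 0 s) + x * (x * 1) * J 0 (s - 1))) by ring.
    eapply ext_pos. 2: exact I. intros t Ht. unfold g. unfold plus, mult, opp; simpl. ring. }
  assert (Le := RInt_gen_le_abs _ _ _ _ Qc Ig).
  assert (Le' : J 2 s - 2 * c * J 1 s + c ^ 2 * J 0 s <= / x * (J 0 (s + 1) - 2 * x * J 0 s + x ^ 2 * J 0 (s - 1))).
  { eapply Rle_trans. apply Rle_abs. apply Le. intros t Ht.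
    assert (Hx0 : 0 < x) by lra.
    rewrite Rabs_pos_eq by (apply Rmult_le_pos; [apply Rmult_le_pos; [apply pow2_ge_0 | left; apply Rpower_pos] | left; apply exp_pos]).
    unfold g, phi. simpl.
    assert (L := ln_sq_le (t / x) ltac:(apply Rdiv_lt_0_compat; lra)).
    unfold c. rewrite ln_div in L by lra.
    assert (E1' : Rpower t (s + 1) = Rpower t s * t) by (rewrite Rpower_plus, Rpower_1; auto).
    assert (E2' : Rpower t (s - 1) = Rpower t s * / t).
    { unfold Rminus. rewrite Rpower_plus, Rpower_Ropp, Rpower_1; auto. }
    rewrite E1', E2'.
    assert (0 < Rpower t s * exp (- t)) by (apply Rmult_lt_0_compat; [apply Rpower_pos | apply exp_pos]).
    replace (/ x * (1 * (Rpower t s * t) * exp (- t) - 2 * x * (1 * Rpower t s * exp (- t)) + x * (x * 1) * (1 * (Rpower t s * / t) * exp (- t))))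
      with ((t / x - 1) ^ 2 / (t / x) * (Rpower t s * exp (- t))) by (field; lra).
    cbv beta. unfold c.
    replace ((ln t - ln x) * ((ln t - ln x) * 1) * Rpower t s * exp (- t)) with ((ln t - ln x) ^ 2 * (Rpower t s * exp (- t))) by ring.
    apply Rmult_le_compat_r; lra. }
  assert (R1 : J 0 (s + 1) = x * J 0 s) by (rewrite J_rec by lra; unfold s; f_equal; ring).
  assert (R2 : J 0 s = s * J 0 (s - 1)).
  { replace s with (s - 1 + 1) at 1 by ring. rewrite J_rec by lra. f_equal; ring. }
  assert (Hrhs : / x * (J 0 (s + 1) - 2 * x * J 0 s + x ^ 2 * J 0 (s - 1)) = J 0 s / s).
  { rewrite R1. replace (J 0 (s - 1)) with (J 0 s / s) by (rewrite R2; field; lra).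
    unfold s. field. split; lra. }
  rewrite Hrhs in Le'.
  assert (Qm : J 2 s - 2 * m * J 1 s + m ^ 2 * J 0 s <= J 2 s - 2 * c * J 1 s + c ^ 2 * J 0 s).
  { assert (J 2 s - 2 * c * J 1 s + c ^ 2 * J 0 s - (J 2 s - 2 * m * J 1 s + m ^ 2 * J 0 s) = J 0 s * (c - m) ^ 2)
      by (unfold m; field; lra).
    assert (0 <= J 0 s * (c - m) ^ 2) by (apply Rmult_le_pos; [lra | apply pow2_ge_0]). lra. }
  unfold TG. fold s.
  replace ((J 2 s * J 0 s - J 1 s ^ 2) / J 0 s ^ 2) with ((J 2 s - 2 * m * J 1 s + m ^ 2 * J 0 s) / J 0 s)
    by (unfold m; field; lra).
  apply (Rmult_le_reg_r (J 0 s)); auto. unfold Rdiv. rewrite Rmult_assoc, Rinv_l by lra.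
  assert (J 0 s / s = / s * J 0 s) by (unfold Rdiv; ring). lra.
Qed.


Lemma sumR_ext K f g : (forall k, (k < K)%nat -> f k = g k) -> sumR K f = sumR K g.
Proof. induction K; simpl; intros H; auto. rewrite IHK by (intros; apply H; lia). rewrite H by lia. auto. Qed.

Lemma sumR_plus K f g : sumR K (fun k => f k + g k) = sumR K f + sumR K g.
Proof. induction K; simpl; auto. lra. rewrite IHK. ring. Qed.

Lemma sumR_minus K f g : sumR K (fun k => f k - g k) = sumR K f - sumR K g.
Proof. induction K; simpl; auto. lra. rewrite IHK. ring. Qed.

Lemma sumR_scal K c f : sumR K (fun k => c * f k) = c * sumR K f.
Proof. induction K; simpl; auto. lra. rewrite IHK. ring. Qed.

Lemma sumR_zero K : sumR K (fun _ => 0) = 0.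
Proof. induction K; simpl; auto. rewrite IHK; ring. Qed.

Definition dl (i k : nat) : R := if Nat.eqb k i then 1 else 0.

Lemma sumR_delta K i g : (i < K)%nat -> sumR K (fun k => dl i k * g k) = g i.
Proof.
  induction K; intros H. lia. simpl. unfold dl at 2.
  destruct (Nat.eqb_spec K i).
  - subst i. rewrite (sumR_ext _ _ (fun _ => 0)). rewrite sumR_zero. ring.
    intros k Hk. unfold dl. destruct (Nat.eqb_spec k K). lia. ring.
  - rewrite IHK by lia. ring.
Qed.

Lemma sumR_nonneg K f : (forall k, (k < K)%nat -> 0 <= f k) -> 0 <= sumR K f.
Proof. induction K; simpl; intros H. lra. assert (0 <= f K) by (apply H; lia). assert (0 <= sumR K f) by (apply IHK; intros; apply H; lia). lra. Qed.

Lemma sumR_le K f g : (forall k, (k < K)%nat -> f k <= g k) -> sumR K f <= sumR K g.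
Proof. induction K; simpl; intros H. lra. assert (f K <= g K) by (apply H; lia). assert (sumR K f <= sumR K g) by (apply IHK; intros; apply H; lia). lra. Qed.

Lemma sumR_ge_term K f i : (i < K)%nat -> (forall k, (k < K)%nat -> 0 <= f k) -> f i <= sumR K f.
Proof.
  induction K; intros Hi H. lia. simpl.
  destruct (Nat.eq_dec i K). subst. assert (0 <= sumR K f) by (apply sumR_nonneg; intros; apply H; lia). lra.
  assert (f i <= sumR K f) by (apply IHK; [lia | intros; apply H; lia]). assert (0 <= f K) by (apply H; lia). lra.
Qed.

Lemma sumR_sq_le K a : (forall k, (k < K)%nat -> 0 <= a k) -> sumR K (fun k => a k ^ 2) <= (sumR K a) ^ 2.
Proof.
  induction K; simpl; intros H. lra.
  assert (IH := IHK (fun k Hk => H k ltac:(lia))).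
  assert (0 <= sumR K a) by (apply sumR_nonneg; intros; apply H; lia). assert (0 <= a K) by (apply H; lia).
  simpl in IH. nra.
Qed.

Lemma sumR_ge_K K f : (forall k, (k < K)%nat -> 1 <= f k) -> INR K <= sumR K f.
Proof. induction K; intros H. simpl; lra. rewrite S_INR. simpl. assert (1 <= f K) by (apply H; lia).
  assert (INR K <= sumR K f) by (apply IHK; intros; apply H; lia). lra. Qed.

Lemma minR_ge1 K f : (1 <= K)%nat -> (forall k, (k < K)%nat -> 1 <= f k) -> 1 <= minR K f.
Proof.
  induction K; intros HK H. lia. destruct K. simpl. apply H; lia.
  change (minR (S (S K)) f) with (Rmin (minR (S K) f) (f (S K))).
  apply Rmin_glb. apply IHK. lia. intros; apply H; lia. apply H; lia.
Qed.

Lemma sumR_deriv K (F F' : nat -> R -> R) t :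
  (forall k, (k < K)%nat -> is_derive (F k) t (F' k t)) ->
  is_derive (fun t => sumR K (fun k => F k t)) t (sumR K (fun k => F' k t)).
Proof.
  induction K; intros H; simpl.
  - apply (is_derive_const 0 t).
  - apply (is_derive_plus (fun t => sumR K (fun k => F k t)) (fun t => F K t)).
    apply IHK. intros; apply H; lia. apply H; lia.
Qed.

Lemma upd_eq (alpha : nat -> R) i t : upd alpha i t = fun k => alpha k + dl i k * (t - alpha i).
Proof. apply functional_extensionality. intros k. unfold upd, dl. destruct (Nat.eqb_spec k i). subst; ring. ring. Qed.

Lemma sumR_upd K (alpha : nat -> R) i t : (i < K)%nat -> sumR K (upd alpha i t) = sumR K alpha + (t - alpha i).
Proof. intros H. rewrite upd_eq. rewrite sumR_plus. rewrite sumR_delta; auto. Qed.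


Definition Lform K lam beta (alpha y : nat -> R) i (t : R) :=
  let S := sumR K alpha + (t - alpha i) in
  sumR K (fun k => (y k - (alpha k + dl i k * (t - alpha i)) / S) ^ 2)
  + sumR K (fun k => (alpha k + dl i k * (t - alpha i)) / S * (1 - (alpha k + dl i k * (t - alpha i)) / S) / (S + 1))
  + beta * (lnGamma S - sumR K (fun k => lnGamma (alpha k + dl i k * (t - alpha i)))
            + sumR K (fun k => (alpha k + dl i k * (t - alpha i) - lam k) * (digamma (alpha k + dl i k * (t - alpha i)) - digamma S))).

Lemma loss_form K lam beta alpha y i t : (i < K)%nat ->
  loss_VIEDL K lam beta (upd alpha i t) y = Lform K lam beta alpha y i t.
Proof.
  intros H. unfold loss_VIEDL, Lform. rewrite (sumR_upd K alpha i t H). rewrite upd_eq. reflexivity.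
Qed.

Lemma dT1 (a yk d c t : R) : c + t <> 0 ->
  is_derive (fun t => (yk - (a + d * t) / (c + t)) ^ 2) t
    (2 * (yk - (a + d * t) / (c + t)) * (- ((d * (c + t) - (a + d * t)) / (c + t) ^ 2))).
Proof. intros H. auto_derive. auto. field. auto. Qed.

Lemma dT2 (a d c t : R) : c + t <> 0 -> c + t + 1 <> 0 ->
  is_derive (fun t => (a + d * t) / (c + t) * (1 - (a + d * t) / (c + t)) / (c + t + 1)) t
    (((d * (c + t) - (a + d * t)) / (c + t) ^ 2 * (1 - (a + d * t) / (c + t))
       - (a + d * t) / (c + t) * ((d * (c + t) - (a + d * t)) / (c + t) ^ 2)) / (c + t + 1)
     - (a + d * t) / (c + t) * (1 - (a + d * t) / (c + t)) / (c + t + 1) ^ 2).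
Proof. intros H H'. auto_derive. auto. field. auto. Qed.

Lemma dlnG (a d b t : R) : 0 < a + d * (t - b) ->
  is_derive (fun t => lnGamma (a + d * (t - b))) t (d * digamma (a + d * (t - b))).
Proof.
  intros H. auto_derive. eexists; apply lnGamma_deriv; auto.
  replace (t + - b) with (t - b) by ring. rewrite Rmult_1_r. reflexivity.
Qed.

Lemma dT3 (a d b c l t : R) : 0 < a + d * (t - b) -> 0 < c + (t - b) ->
  is_derive (fun t => (a + d * (t - b) - l) * (digamma (a + d * (t - b)) - digamma (c + (t - b)))) t
    (d * (digamma (a + d * (t - b)) - digamma (c + (t - b)))
     + (a + d * (t - b) - l) * (d * TG (a + d * (t - b)) - TG (c + (t - b)))).
Proof.
  intros H1 H2. auto_derive.
  split. eexists; apply digamma_deriv; auto. split. eexists; apply digamma_deriv; auto. auto.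
  replace (t + - b) with (t - b) by ring.
  assert (E1 : Derive (fun x => digamma x) (a + d * (t - b)) = TG (a + d * (t - b))) by (apply is_derive_unique; apply digamma_deriv; auto).
  assert (E2 : Derive (fun x => digamma x) (c + (t - b)) = TG (c + (t - b))) by (apply is_derive_unique; apply digamma_deriv; auto).
  rewrite E1, E2.
  ring.
Qed.

Lemma dlnG1 (c b t : R) : 0 < c + (t - b) ->
  is_derive (fun t => lnGamma (c + (t - b))) t (digamma (c + (t - b))).
Proof.
  intros H. auto_derive. eexists; apply lnGamma_deriv; auto.
  replace (t + - b) with (t - b) by ring. rewrite Rmult_1_l. reflexivity.
Qed.

Lemma dT1b (a yk d c b t : R) : c + (t - b) <> 0 ->
  is_derive (fun t => (yk - (a + d * (t - b)) / (c + (t - b))) ^ 2) t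
    (2 * (yk - (a + d * (t - b)) / (c + (t - b))) * (- ((d * (c + (t - b)) - (a + d * (t - b))) / (c + (t - b)) ^ 2))).
Proof. intros H. auto_derive. auto. field. auto. Qed.

Lemma dT2b (a d c b t : R) : c + (t - b) <> 0 -> c + (t - b) + 1 <> 0 ->
  is_derive (fun t => (a + d * (t - b)) / (c + (t - b)) * (1 - (a + d * (t - b)) / (c + (t - b))) / (c + (t - b) + 1)) t
    (((d * (c + (t - b)) - (a + d * (t - b))) / (c + (t - b)) ^ 2 * (1 - (a + d * (t - b)) / (c + (t - b)))
       - (a + d * (t - b)) / (c + (t - b)) * ((d * (c + (t - b)) - (a + d * (t - b))) / (c + (t - b)) ^ 2)) / (c + (t - b) + 1)
     - (a + d * (t - b)) / (c + (t - b)) * (1 - (a + d * (t - b)) / (c + (t - b))) / (c + (t - b) + 1) ^ 2).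
Proof. intros H H'. auto_derive. auto. field. auto. Qed.

Lemma sumR_deriv' K (F : nat -> R -> R) (v : nat -> R) t :
  (forall k, (k < K)%nat -> is_derive (F k) t (v k)) ->
  is_derive (fun t => sumR K (fun k => F k t)) t (sumR K v).
Proof.
  induction K; intros H; simpl.
  - apply (is_derive_const 0 t).
  - apply (is_derive_plus (fun t => sumR K (fun k => F k t)) (fun t => F K t)).
    apply IHK. intros; apply H; lia. apply H; lia.
Qed.

Definition Dgen K lam beta (alpha y : nat -> R) i (t : R) :=
  let c := sumR K alpha in let b := alpha i in
  sumR K (fun k => 2 * (y k - (alpha k + dl i k * (t - b)) / (c + (t - b))) * (- ((dl i k * (c + (t - b)) - (alpha k + dl i k * (t - b))) / (c + (t - b)) ^ 2)))
  + sumR K (fun k => ((dl i k * (c + (t - b)) - (alpha k + dl i k * (t - b))) / (c + (t - b)) ^ 2 * (1 - (alpha k + dl i k * (t - b)) / (c + (t - b)))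
       - (alpha k + dl i k * (t - b)) / (c + (t - b)) * ((dl i k * (c + (t - b)) - (alpha k + dl i k * (t - b))) / (c + (t - b)) ^ 2)) / (c + (t - b) + 1)
     - (alpha k + dl i k * (t - b)) / (c + (t - b)) * (1 - (alpha k + dl i k * (t - b)) / (c + (t - b))) / (c + (t - b) + 1) ^ 2)
  + beta * (digamma (c + (t - b)) - sumR K (fun k => dl i k * digamma (alpha k + dl i k * (t - b)))
     + sumR K (fun k => dl i k * (digamma (alpha k + dl i k * (t - b)) - digamma (c + (t - b)))
     + (alpha k + dl i k * (t - b) - lam k) * (dl i k * TG (alpha k + dl i k * (t - b)) - TG (c + (t - b))))).

Lemma Lform_deriv K lam beta alpha y i t :
  0 < sumR K alpha + (t - alpha i) ->
  (forall k, (k < K)%nat -> 0 < alpha k + dl i k * (t - alpha i)) ->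
  is_derive (Lform K lam beta alpha y i) t (Dgen K lam beta alpha y i t).
Proof.
  intros HS Hu. unfold Lform, Dgen.
  set (c := sumR K alpha). set (b := alpha i). fold c in HS. fold b in HS, Hu.
  apply (is_derive_plus (fun t => _ + _) (fun t => beta * _)).
  apply (is_derive_plus (fun t => sumR K _) (fun t => sumR K _)).
  - apply (sumR_deriv' K (fun k t => (y k - (alpha k + dl i k * (t - b)) / (c + (t - b))) ^ 2)).
    intros k Hk. apply dT1b. lra.
  - apply (sumR_deriv' K (fun k t => (alpha k + dl i k * (t - b)) / (c + (t - b)) * (1 - (alpha k + dl i k * (t - b)) / (c + (t - b))) / (c + (t - b) + 1))).
    intros k Hk. apply dT2b; lra.
  - apply (is_derive_scal (fun t => _)).
    apply (is_derive_plus (fun t => _ - _) (fun t => sumR K _)).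
    apply (is_derive_minus (fun t => lnGamma _) (fun t => sumR K _)).
    + apply dlnG1; auto.
    + apply (sumR_deriv' K (fun k t => lnGamma (alpha k + dl i k * (t - b)))).
      intros k Hk. apply dlnG. auto.
    + apply (sumR_deriv' K (fun k t => (alpha k + dl i k * (t - b) - lam k) * (digamma (alpha k + dl i k * (t - b)) - digamma (c + (t - b))))).
      intros k Hk. apply dT3; auto.
Qed.


Lemma sum4 K c1 c2 c3 c4 (A B C E : nat -> R) :
  sumR K (fun k => c1 * A k + c2 * B k + c3 * C k + c4 * E k)
  = c1 * sumR K A + c2 * sumR K B + c3 * sumR K C + c4 * sumR K E.
Proof. induction K; simpl. ring. rewrite IHK. ring. Qed.

Lemma D_closed K lam beta alpha y i : (i < K)%nat ->
  sumR K alpha <> 0 -> sumR K alpha + 1 <> 0 ->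
  let S := sumR K alpha in
  Dgen K lam beta alpha y i (alpha i) =
    ((-2 / S) * y i + (2 / S ^ 2) * sumR K (fun k => y k * alpha k) + (2 / S ^ 2) * alpha i
      + (- 2 / S ^ 3) * sumR K (fun k => alpha k ^ 2))
    + ((2 * sumR K (fun k => alpha k ^ 2) / S - 2 * alpha i) / (S ^ 2 * (S + 1))
      - (1 - sumR K (fun k => alpha k ^ 2) / S ^ 2) / (S + 1) ^ 2)
    + beta * ((alpha i - lam i) * TG (alpha i) - (S - sumR K lam) * TG S).
Proof.
  intros Hi HS HS1 S. unfold Dgen. fold S.
  assert (HS' : S <> 0) by auto. assert (HS1' : S + 1 <> 0) by auto.
  match goal with |- ?P1 + ?P2 + beta * (?Dg - ?P3 + ?P4) = _ =>
    assert (E1 : P1 = (-2 / S) * y i + (2 / S ^ 2) * sumR K (fun k => y k * alpha k) + (2 / S ^ 2) * alpha i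
      + (- 2 / S ^ 3) * sumR K (fun k => alpha k ^ 2));
    [ transitivity (sumR K (fun k => (-2 / S) * (dl i k * y k) + (2 / S ^ 2) * (y k * alpha k)
                                 + (2 / S ^ 2) * (dl i k * alpha k) + (- 2 / S ^ 3) * (alpha k ^ 2)));
      [ apply sumR_ext; intros k Hk; rewrite Rminus_diag, Rmult_0_r, !Rplus_0_r; field; auto
      | rewrite sum4, !sumR_delta by auto; reflexivity ]
    | ];
    assert (E2 : P2 = (2 * sumR K (fun k => alpha k ^ 2) / S - 2 * alpha i) / (S ^ 2 * (S + 1))
      - (1 - sumR K (fun k => alpha k ^ 2) / S ^ 2) / (S + 1) ^ 2);
    [ transitivity (sumR K (fun k => (1 / (S * (S + 1))) * (dl i k * 1) + (- 2 / (S ^ 2 * (S + 1))) * (dl i k * alpha k)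
       + (- 1 / (S ^ 2 * (S + 1)) - 1 / (S * (S + 1) ^ 2)) * alpha k
       + (2 / (S ^ 3 * (S + 1)) + 1 / (S ^ 2 * (S + 1) ^ 2)) * (alpha k ^ 2)));
      [ apply sumR_ext; intros k Hk; rewrite Rminus_diag, Rmult_0_r, !Rplus_0_r; field; auto
      | rewrite sum4, !sumR_delta by auto; fold S; field; auto ]
    | ];
    assert (E3 : P3 = digamma (alpha i));
    [ transitivity (sumR K (fun k => dl i k * digamma (alpha k)));
      [ apply sumR_ext; intros k Hk; rewrite Rminus_diag, Rmult_0_r, !Rplus_0_r; reflexivity
      | rewrite sumR_delta by auto; reflexivity ]
    | ];
    assert (E4 : P4 = digamma (alpha i) - digamma S + ((alpha i - lam i) * TG (alpha i) - (S - sumR K lam) * TG S));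
    [ transitivity (sumR K (fun k => 1 * (dl i k * digamma (alpha k)) + (- digamma S) * (dl i k * 1)
      + 1 * (dl i k * ((alpha k - lam k) * TG (alpha k))) + (- TG S) * (alpha k - lam k)));
      [ apply sumR_ext; intros k Hk; rewrite Rminus_diag, Rmult_0_r, !Rplus_0_r; ring
      | rewrite sum4, !sumR_delta by auto; rewrite sumR_minus; fold S; ring ]
    | ];
    rewrite E1, E2, E3, E4
  end.
  rewrite Rminus_diag, Rplus_0_r. ring.
Qed.

Lemma part1 (S yi Y ai q : R) : 2 <= S -> 0 <= yi <= 1 -> 0 <= Y <= S -> 0 <= ai <= S -> 0 <= q <= S ->
  Rabs ((-2 / S) * yi + (2 / S ^ 2) * Y + (2 / S ^ 2) * ai + (- 2 / S ^ 3) * (q * S)) <= 2.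
Proof.
  intros HS Hy HY Ha Hq.
  replace ((-2 / S) * yi + (2 / S ^ 2) * Y + (2 / S ^ 2) * ai + (- 2 / S ^ 3) * (q * S))
    with ((-2) * (S * yi - Y - ai + q) / S ^ 2) by (field; lra).
  unfold Rdiv. rewrite Rabs_mult, Rabs_mult, Rabs_Rinv by (apply pow_nonzero; lra).
  rewrite (Rabs_pos_eq (S ^ 2)) by (apply pow_le; lra).
  assert (Rabs (S * yi - Y - ai + q) <= 2 * S) by (apply Rabs_le; split; nra).
  assert (0 < S ^ 2) by (apply pow_lt; lra).
  apply (Rmult_le_reg_r (S ^ 2)); auto. rewrite Rmult_assoc, Rinv_l by lra.
  replace (Rabs (-2)) with 2 by (rewrite Rabs_left by lra; ring). simpl. nra.
Qed.

Lemma part2 (S K q ai Q : R) : 1 <= K -> K <= S -> 0 <= q <= S -> 0 <= ai <= S -> 0 <= Q <= S ^ 2 ->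
  Rabs ((2 * q - 2 * ai) / (S ^ 2 * (S + 1)) - (1 - Q / S ^ 2) / (S + 1) ^ 2)
  <= 1 / (K + 1) ^ 2 + 2 / (K * (K + 1)).
Proof.
  intros HK HKS Hq Ha HQ.
  assert (HS : 0 < S) by lra.
  assert (A1 : Rabs ((2 * q - 2 * ai) / (S ^ 2 * (S + 1))) <= 2 / (K * (K + 1))).
  { replace ((2 * q - 2 * ai) / (S ^ 2 * (S + 1))) with ((2 * q - 2 * ai) / S * / (S * (S + 1))) by (field; lra).
    rewrite Rabs_mult. rewrite (Rabs_pos_eq (/ (S * (S + 1)))) by (left; apply Rinv_0_lt_compat; nra).
    assert (Rabs ((2 * q - 2 * ai) / S) <= 2).
    { unfold Rdiv. rewrite Rabs_mult, Rabs_Rinv, (Rabs_pos_eq S) by lra.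
      apply (Rmult_le_reg_r S); auto. rewrite Rmult_assoc, Rinv_l by lra.
      assert (Rabs (2 * q - 2 * ai) <= 2 * S) by (apply Rabs_le; split; nra). lra. }
    assert (/ (S * (S + 1)) <= / (K * (K + 1))) by (apply Rinv_le_contravar; nra).
    assert (0 <= / (S * (S + 1))) by (left; apply Rinv_0_lt_compat; nra).
    unfold Rdiv. replace (2 * / (K * (K + 1))) with (2 * / (K * (K + 1))) by ring.
    assert (0 <= Rabs ((2 * q - 2 * ai) / S)) by apply Rabs_pos. nra. }
  assert (A2 : 0 <= (1 - Q / S ^ 2) / (S + 1) ^ 2 <= 1 / (K + 1) ^ 2).
  { assert (0 < S ^ 2) by (apply pow_lt; lra).
    assert (0 <= Q / S ^ 2 <= 1).
    { split. apply Rmult_le_pos; [lra | left; apply Rinv_0_lt_compat; lra].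
      apply (Rmult_le_reg_r (S ^ 2)); auto. unfold Rdiv. rewrite Rmult_assoc, Rinv_l by lra. lra. }
    assert (0 < (S + 1) ^ 2) by (apply pow_lt; lra).
    assert (/ (S + 1) ^ 2 <= / (K + 1) ^ 2) by (apply Rinv_le_contravar; [apply pow_lt; lra | apply pow_incr; lra]).
    assert (0 < / (S + 1) ^ 2) by (apply Rinv_0_lt_compat; auto).
    unfold Rdiv. split. apply Rmult_le_pos; lra. nra. }
  set (A := (2 * q - 2 * ai) / (S ^ 2 * (S + 1))) in *. set (B := (1 - Q / S ^ 2) / (S + 1) ^ 2) in *.
  assert (Rabs (A - B) <= Rabs A + Rabs B) by (unfold Rminus; eapply Rle_trans; [apply Rabs_triang | rewrite Rabs_Ropp; lra]).
  rewrite (Rabs_pos_eq B) in H by lra. lra.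
Qed.

Lemma part3 (beta a b : R) : 0 < beta -> 0 <= a <= 1 -> 0 <= b <= 1 -> Rabs (beta * (a - b)) <= beta.
Proof. intros Hb Ha Hb'. rewrite Rabs_mult, (Rabs_pos_eq beta) by lra. rewrite <- (Rmult_1_r beta) at 2.
  apply Rmult_le_compat_l. lra. apply Rabs_le. split; lra. Qed.

Lemma TGprod (e l : R) : 0 <= e -> 1 <= l -> 0 <= e * TG (e + l) <= 1.
Proof.
  intros He Hl. assert (T0 := TG_nonneg (e + l) ltac:(lra)).
  split. apply Rmult_le_pos; auto.
  destruct (Req_dec e 0). subst. lra.
  assert (T1 := TG_le (e + l) ltac:(lra)).
  assert (e * TG (e + l) <= e * / (e + l - 1)) by (apply Rmult_le_compat_l; lra).
  assert (e * / (e + l - 1) <= 1).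
  { apply (Rmult_le_reg_r (e + l - 1)). lra. rewrite Rmult_assoc, Rinv_l by lra. lra. }
  lra.
Qed.

Lemma D_bound K lam beta (y e : nat -> R) i :
  (1 <= K)%nat -> (forall k, (k < K)%nat -> 1 <= lam k) -> 0 < beta ->
  in_simplex K y -> (forall k, (k < K)%nat -> 0 <= e k) -> (i < K)%nat ->
  Rabs (Dgen K lam beta (alpha_of lam e) y i (alpha_of lam e i)) <= Lh_bound K lam beta.
Proof.
  intros HK Hlam Hb [Hy1 Hy2] He Hi.
  set (al := alpha_of lam e).
  assert (Hal : forall k, (k < K)%nat -> 1 <= al k).
  { intros k Hk. unfold al, alpha_of. assert (H1 := Hlam k Hk). assert (H2 := He k Hk). lra. }
  set (S := sumR K al). set (La := sumR K lam).
  assert (HK1 : 1 <= INR K) by (apply (le_INR 1); lia).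
  assert (HSK : INR K <= S) by (apply sumR_ge_K; auto).
  assert (HLK : INR K <= La) by (apply sumR_ge_K; auto).
  assert (SE : S - La = sumR K e).
  { unfold S, La. rewrite <- sumR_minus. apply sumR_ext. intros k Hk. unfold al, alpha_of. ring. }
  assert (HE : 0 <= sumR K e) by (apply sumR_nonneg; auto).
  rewrite D_closed by (auto; fold S; lra). fold S. fold La.
  set (Y := sumR K (fun k => y k * al k)).
  set (Q := sumR K (fun k => al k ^ 2)).
  assert (HY : 0 <= Y <= S).
  { split. apply sumR_nonneg. intros k Hk. assert (H1 := Hy1 k Hk). assert (H2 := Hal k Hk). apply Rmult_le_pos; lra.
    apply sumR_le. intros k Hk. assert (H1 := Hy1 k Hk). assert (H2 := Hal k Hk).
    rewrite <- (Rmult_1_l (al k)) at 2. apply Rmult_le_compat_r; lra. }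
  assert (HQ : 0 <= Q <= S ^ 2).
  { split. apply sumR_nonneg. intros k Hk. apply pow2_ge_0.
    apply sumR_sq_le. intros k Hk. assert (H2 := Hal k Hk). lra. }
  assert (Hai : 0 <= al i <= S).
  { split. assert (H2 := Hal i Hi). lra. apply sumR_ge_term; auto. intros k Hk. assert (H2 := Hal k Hk). lra. }
  assert (Hyi := Hy1 i Hi).
  assert (HS : 0 < S) by lra.
  set (q := Q / S).
  assert (Hq : 0 <= q <= S).
  { unfold q. split. apply Rmult_le_pos; [lra | left; apply Rinv_0_lt_compat; lra].
    apply (Rmult_le_reg_r S); auto. unfold Rdiv. rewrite Rmult_assoc, Rinv_l by lra. assert (S * S = S ^ 2) by ring. lra. }
  assert (P1 : Rabs ((-2 / S) * y i + (2 / S ^ 2) * Y + (2 / S ^ 2) * al i + (- 2 / S ^ 3) * Q) <= 2).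
  { destruct (Nat.eq_dec K 1) as [E1|E1].
    - subst K. assert (i = 0%nat) by lia. subst i.
      unfold Y, Q, S in *. simpl in *. rewrite Rplus_0_l in *.
      assert (y 0%nat = 1) by lra. rewrite H.
      match goal with |- Rabs ?X <= _ => replace X with 0 by (field; lra) end.
      rewrite Rabs_R0; lra.
    - assert (2 <= INR K). { replace 2 with (INR 2) by (simpl; ring). apply le_INR. lia. }
      replace Q with (q * S) by (unfold q; field; lra).
      apply part1; lra. }
  assert (P2 := part2 S (INR K) q (al i) Q HK1 HSK Hq Hai HQ).
  replace (2 * Q / S) with (2 * q) by (unfold q; field; lra).
  assert (Ta : 0 <= (al i - lam i) * TG (al i) <= 1).
  { replace (al i - lam i) with (e i) by (unfold al, alpha_of; ring).
    unfold al, alpha_of. apply TGprod; [apply He; exact Hi | apply Hlam; exact Hi]. }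
  assert (Tb : 0 <= (S - La) * TG S <= 1).
  { rewrite SE. replace S with (sumR K e + La) by lra. apply TGprod; [exact HE | lra]. }
  assert (P3 : Rabs (beta * ((al i - lam i) * TG (al i) - (S - La) * TG S)) <= beta).
  { apply part3; [exact Hb | exact Ta | exact Tb]. }
  assert (Hm : 1 <= minR K lam) by (apply minR_ge1; auto).
  assert (0 < 1 / minR K lam) by (apply Rdiv_lt_0_compat; lra).
  assert (0 < 1 / La) by (apply Rdiv_lt_0_compat; lra).
  unfold Lh_bound. fold La.
  set (A1 := (-2 / S) * y i + (2 / S ^ 2) * Y + (2 / S ^ 2) * al i + (- 2 / S ^ 3) * Q) in *.
  set (A2 := (2 * q - 2 * al i) / (S ^ 2 * (S + 1)) - (1 - Q / S ^ 2) / (S + 1) ^ 2) in *.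
  set (A3 := beta * ((al i - lam i) * TG (al i) - (S - La) * TG S)) in *.
  assert (Rabs (A1 + A2 + A3) <= Rabs A1 + Rabs A2 + Rabs A3).
  { eapply Rle_trans. apply Rabs_triang. assert (Rabs (A1 + A2) <= Rabs A1 + Rabs A2) by apply Rabs_triang. lra. }
  assert (beta <= beta * (2 + 1 / minR K lam + 1 / La)).
  { rewrite <- (Rmult_1_r beta) at 1. apply Rmult_le_compat_l; lra. }
  lra.
Qed.


Lemma part_one K lam beta (y e : nat -> R) i :
  (1 <= K)%nat -> (forall k, (k < K)%nat -> 1 <= lam k) -> 0 < beta ->
  in_simplex K y -> (forall k, (k < K)%nat -> 0 <= e k) -> (i < K)%nat ->
  ex_derive (fun t => loss_VIEDL K lam beta (upd (alpha_of lam e) i t) y) (alpha_of lam e i) /\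
  Rabs (Derive (fun t => loss_VIEDL K lam beta (upd (alpha_of lam e) i t) y) (alpha_of lam e i)) <= Lh_bound K lam beta.
Proof.
  intros HK Hlam Hb Hy He Hi.
  set (al := alpha_of lam e).
  assert (Hal : forall k, (k < K)%nat -> 1 <= al k).
  { intros k Hk. unfold al, alpha_of. assert (H1 := Hlam k Hk). assert (H2 := He k Hk). lra. }
  assert (HS : INR K <= sumR K al) by (apply sumR_ge_K; auto).
  assert (HK1 : 1 <= INR K) by (apply (le_INR 1); lia).
  assert (D : is_derive (fun t => loss_VIEDL K lam beta (upd al i t) y) (al i) (Dgen K lam beta al y i (al i))).
  { apply is_derive_ext with (Lform K lam beta al y i).
    intros t. rewrite loss_form; auto.
    apply Lform_deriv. rewrite Rminus_diag, Rplus_0_r. lra.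
    intros k Hk. rewrite Rminus_diag, Rmult_0_r, Rplus_0_r. assert (H1 := Hal k Hk). lra. }
  split. eexists; exact D.
  match goal with |- Rabs (Derive ?f ?x) <= _ => replace (Derive f x) with (Dgen K lam beta al y i (al i)) end.
  apply D_bound; auto. symmetry. apply is_derive_unique. exact D.
Qed.

Lemma loss_ext K lam beta (a a' y : nat -> R) : (forall k, (k < K)%nat -> a k = a' k) ->
  loss_VIEDL K lam beta a y = loss_VIEDL K lam beta a' y.
Proof.
  intros H. unfold loss_VIEDL. rewrite (sumR_ext K a a' H).
  rewrite (sumR_ext K (fun k => (y k - a k / sumR K a') ^ 2) (fun k => (y k - a' k / sumR K a') ^ 2)) by (intros k Hk; rewrite H; auto).
  rewrite (sumR_ext K (fun k => a k / sumR K a' * (1 - a k / sumR K a') / (sumR K a' + 1)) (fun k => a' k / sumR K a' * (1 - a' k / sumR K a') / (sumR K a' + 1))) by (intros k Hk; rewrite H; auto).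
  rewrite (sumR_ext K (fun k => lnGamma (a k)) (fun k => lnGamma (a' k))) by (intros k Hk; rewrite H; auto).
  rewrite (sumR_ext K (fun k => (a k - lam k) * (digamma (a k) - digamma (sumR K a'))) (fun k => (a' k - lam k) * (digamma (a' k) - digamma (sumR K a')))) by (intros k Hk; rewrite H; auto).
  auto.
Qed.

Definition mix (e e' : nat -> R) (m : nat) : nat -> R := fun k => if Nat.ltb k m then e' k else e k.

Lemma upd_self (a : nat -> R) m : upd a m (a m) = a.
Proof. apply functional_extensionality. intros k. unfold upd. destruct (Nat.eqb_spec k m); subst; auto. Qed.

Lemma step K lam beta (y e e' : nat -> R) m :
  (1 <= K)%nat -> (forall k, (k < K)%nat -> 1 <= lam k) -> 0 < beta ->
  in_simplex K y -> (forall k, (k < K)%nat -> 0 <= e k) -> (forall k, (k < K)%nat -> 0 <= e' k) -> (m < K)%nat ->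
  Rabs (loss_VIEDL K lam beta (alpha_of lam (mix e e' m)) y - loss_VIEDL K lam beta (alpha_of lam (mix e e' (S m))) y)
  <= Lh_bound K lam beta * Rabs (e m - e' m).
Proof.
  intros HK Hlam Hb Hy He He' Hm.
  set (a0 := alpha_of lam (mix e e' m)).
  set (F := fun t => loss_VIEDL K lam beta (upd a0 m t) y).
  assert (Ea : loss_VIEDL K lam beta a0 y = F (e m + lam m)).
  { unfold F. replace (e m + lam m) with (a0 m). rewrite upd_self; auto.
    unfold a0, alpha_of, mix. destruct (Nat.ltb_spec m m). lia. auto. }
  assert (Eb : loss_VIEDL K lam beta (alpha_of lam (mix e e' (S m))) y = F (e' m + lam m)).
  { unfold F. f_equal. apply functional_extensionality. intros k. unfold upd, a0, alpha_of, mix.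
    destruct (Nat.eqb_spec k m). subst. destruct (Nat.ltb_spec m (S m)). auto. lia.
    destruct (Nat.ltb_spec k (S m)); destruct (Nat.ltb_spec k m); auto; lia. }
  assert (Hmix : forall k, (k < K)%nat -> 0 <= mix e e' m k).
  { intros k Hk. unfold mix. destruct (Nat.ltb k m); auto. }
  assert (DF : forall x, Rmin (e m + lam m) (e' m + lam m) <= x <= Rmax (e m + lam m) (e' m + lam m) ->
     ex_derive F x /\ Rabs (Derive F x) <= Lh_bound K lam beta).
  { intros x Hx.
    set (e2 := fun k => if Nat.eqb k m then x - lam m else mix e e' m k).
    assert (He2 : forall k, (k < K)%nat -> 0 <= e2 k).
    { intros k Hk. unfold e2. destruct (Nat.eqb_spec k m). subst.
      assert (H1 := He m Hk). assert (H2 := He' m Hk).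
      unfold Rmin, Rmax in Hx. destruct Rle_dec; lra. apply Hmix; auto. }
    assert (EF : forall t, loss_VIEDL K lam beta (upd (alpha_of lam e2) m t) y = F t).
    { intros t. unfold F. f_equal. apply functional_extensionality. intros k.
      unfold upd, e2, a0, alpha_of. destruct (Nat.eqb_spec k m); auto. }
    assert (Ex : alpha_of lam e2 m = x).
    { unfold alpha_of, e2. rewrite Nat.eqb_refl. ring. }
    destruct (part_one K lam beta y e2 m HK Hlam Hb Hy He2 Hm) as [P1 P2].
    rewrite Ex in P1, P2. split. apply (ex_derive_ext _ _ _ EF P1).
    rewrite <- (Derive_ext _ _ x EF). exact P2. }
  destruct (MVT_gen F (e m + lam m) (e' m + lam m) (Derive F)) as [c [Hc Ec]].
  - intros x Hx. apply Derive_correct. apply DF. lra.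
  - intros x Hx. apply continuity_pt_filterlim. apply (@ex_derive_continuous R_AbsRing R_NormedModule). apply DF. auto.
  - rewrite Ea, Eb. rewrite <- Rabs_Ropp. replace (- (F (e m + lam m) - F (e' m + lam m))) with (F (e' m + lam m) - F (e m + lam m)) by ring.
    rewrite Ec, Rabs_mult. replace (e' m + lam m - (e m + lam m)) with (- (e m - e' m)) by ring. rewrite Rabs_Ropp.
    apply Rmult_le_compat_r. apply Rabs_pos. apply DF. auto.
Qed.

Lemma part_two K lam beta (y e e' : nat -> R) :
  (1 <= K)%nat -> (forall k, (k < K)%nat -> 1 <= lam k) -> 0 < beta ->
  in_simplex K y -> (forall k, (k < K)%nat -> 0 <= e k) -> (forall k, (k < K)%nat -> 0 <= e' k) ->
  Rabs (loss_VIEDL K lam beta (alpha_of lam e) y - loss_VIEDL K lam beta (alpha_of lam e') y)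
  <= Lh_bound K lam beta * sumR K (fun k => Rabs (e k - e' k)).
Proof.
  intros HK Hlam Hb Hy He He'.
  assert (M0 : alpha_of lam (mix e e' 0) = alpha_of lam e).
  { apply functional_extensionality. intros k. unfold alpha_of, mix. destruct (Nat.ltb_spec k 0); auto; lia. }
  assert (Ind : forall m, (m <= K)%nat ->
     Rabs (loss_VIEDL K lam beta (alpha_of lam e) y - loss_VIEDL K lam beta (alpha_of lam (mix e e' m)) y)
     <= Lh_bound K lam beta * sumR m (fun k => Rabs (e k - e' k))).
  { induction m; intros Hm.
    - rewrite M0. unfold Rminus. rewrite Rplus_opp_r, Rabs_R0. simpl. lra.
    - assert (IH := IHm ltac:(lia)).
      assert (St := step K lam beta y e e' m HK Hlam Hb Hy He He' ltac:(lia)).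
      simpl. rewrite Rmult_plus_distr_l.
      set (L0 := loss_VIEDL K lam beta (alpha_of lam e) y) in *.
      set (L1 := loss_VIEDL K lam beta (alpha_of lam (mix e e' m)) y) in *.
      set (L2 := loss_VIEDL K lam beta (alpha_of lam (mix e e' (S m))) y) in *.
      replace (L0 - L2) with ((L0 - L1) + (L1 - L2)) by ring.
      eapply Rle_trans. apply Rabs_triang. lra. }
  assert (E' : loss_VIEDL K lam beta (alpha_of lam (mix e e' K)) y = loss_VIEDL K lam beta (alpha_of lam e') y).
  { apply loss_ext. intros k Hk. unfold alpha_of, mix. destruct (Nat.ltb_spec k K); auto; lia. }
  rewrite <- E'. apply Ind. lia.
Qed.


Theorem theoremB1 (K : nat) (lam : nat -> R) (beta : R) :
  (1 <= K)%nat ->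
  (forall k, (k < K)%nat -> 1 <= lam k) ->
  0 < beta ->
  (* uniform bound on the partial derivatives w.r.t. the network output *)
  (forall (y e : nat -> R) (i : nat),
      in_simplex K y ->
      (forall k, (k < K)%nat -> 0 <= e k) ->
      (i < K)%nat ->
      ex_derive (fun t => loss_VIEDL K lam beta (upd (alpha_of lam e) i t) y)
                (alpha_of lam e i) /\
      Rabs (Derive (fun t => loss_VIEDL K lam beta (upd (alpha_of lam e) i t) y)
                   (alpha_of lam e i)) <= Lh_bound K lam beta)
  /\
  (* hence global Lipschitz continuity in the network output (l1 norm) *)
  (forall (y e e' : nat -> R),
      in_simplex K y ->
      (forall k, (k < K)%nat -> 0 <= e k) ->
      (forall k, (k < K)%nat -> 0 <= e' k) ->
      Rabs (loss_VIEDL K lam beta (alpha_of lam e) y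
            - loss_VIEDL K lam beta (alpha_of lam e') y)
      <= Lh_bound K lam beta * sumR K (fun k => Rabs (e k - e' k))).
Proof.
  intros HK Hlam Hb. split.
  - intros y e i Hy He Hi. apply part_one; auto.
  - intros y e e' Hy He He'. apply part_two; auto.
Qed.
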